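(* Let $H(p,x,\omega)$ be quasiconcave satisfying (A1)–(A3), with effective Hamiltonian $\overline H$. Fix $p_0\in\mathbb R^d$. Then there is an event $\widetilde\Omega\subseteq\Omega$ with $\mathbb P[\widetilde\Omega]=1$ such that for every $(\epsilon,R,\omega)\in(0,1)\times(0,\infty)\times\widetilde\Omega$ there is $\lambda_0=\lambda_0(p_0,\epsilon,R,\omega)>0$ such that for all $0<\lambda<\lambda_0$ and all $x\in B_{R/\lambda}(0)$, $$p_0+D^+v_\lambda(x,p_0,\omega)\subseteq\{q\in\mathbb R^d:H(q,x,\omega)>\overline H(p_0)-\epsilon\},$$ where $v_\lambda(x,p_0,\omega)$ is the unique viscosity solution of $\lambda v_\lambda+H(p_0+Dv_\lambda,x,\omega)=0$ in $\mathbb R^d$.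
   Context: Setting: $(\Omega,\mathcal F,\mathbb P)$ is a probability space with an ergodic group $\{\tau_x\}_{x\in\mathbb R^d}$ of measure-preserving maps ($\tau_{y+z}=\tau_y\circ\tau_z$). (A1) $H(p,y,\tau_z\omega)=H(p,y+z,\omega)$; (A2) $\liminf_{|p|\to\infty}\operatorname{ess\,inf}_{(x,\omega)}|H(p,x,\omega)|=\infty$; (A3) for each $\omega$ and compact $K$ there is a modulus $\rho$ with $|H(p,x,\omega)-H(q,y,\omega)|\le\rho(|p-q|+|x-y|)$ for $p,q\in K$, $x,y\in\mathbb R^d$, and $H$ bounded on $K\times\mathbb R^d\times\Omega$. Quasiconcave: for each $(x,\omega)$, $p\mapsto H(p,x,\omega)$ has convex superlevel sets $\{H\ge c\}$. A quasiconcave $H$ satisfying (A1)–(A3) is (by known results) regularly homogenizable at every $p$: there is $\overline H(p)$ with $\mathbb P[\limsup_{\lambda\to0}\max_{|x|\le R/\lambda}|\lambda v_\lambda(x,p,\omega)+\overline H(p)|=0\ \forall R>0]=1$; $\overline H$ is the effective Hamiltonian. For continuous $f$, $D^+f(x_0)=\{p:\limsup_{x\to x_0}\frac{f(x)-f(x_0)-p\cdot(x-x_0)}{|x-x_0|}\le0\}$. *)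

(* Defs.v *)
From mathcomp Require Import all_boot.
From Stdlib Require Import Reals.


Unset Printing Implicit Defensive.
Local Open Scope R_scope.

Definition vec (d : nat) := 'I_d -> R.
Definition vadd {d} (p q : vec d) : vec d := fun i => p i + q i.
Definition vsub {d} (p q : vec d) : vec d := fun i => p i - q i.
Definition vscale {d} (t : R) (p : vec d) : vec d := fun i => t * p i.
Definition vzero {d} : vec d := fun _ => 0.
Definition dot {d} (p q : vec d) : R := \big[Rplus/0]_(i < d) (p i * q i).
Definition vnorm {d} (p : vec d) : R := sqrt (dot p p).

Definition sigma_algebra {Omega : Type} (F : (Omega -> Prop) -> Prop) : Prop :=
  F (fun _ => True) /\
  (forall A, F A -> F (fun w => ~ A w)) /\
  (forall A : nat -> Omega -> Prop, (forall n, F (A n)) -> F (fun w => exists n, A n w)).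

Definition probability {Omega : Type} (F : (Omega -> Prop) -> Prop)
  (P : (Omega -> Prop) -> R) : Prop :=
  sigma_algebra F /\
  (forall A, F A -> 0 <= P A) /\
  P (fun _ => True) = 1 /\
  (forall A : nat -> Omega -> Prop,
     (forall n, F (A n)) ->
     (forall n m w, n <> m -> A n w -> A m w -> False) ->
     infinite_sum (fun n => P (A n)) (P (fun w => exists n, A n w))).

Definition almost_surely {Omega : Type} (F : (Omega -> Prop) -> Prop)
  (P : (Omega -> Prop) -> R) (Q : Omega -> Prop) : Prop :=
  exists E, F E /\ P E = 1 /\ forall w, E w -> Q w.

Definition ergodic_group {d : nat} {Omega : Type} (F : (Omega -> Prop) -> Prop)
  (P : (Omega -> Prop) -> R) (tau : vec d -> Omega -> Omega) : Prop :=
  (forall w, tau vzero w = w) /\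
  (forall y z w, tau (vadd y z) w = tau y (tau z w)) /\
  (forall x A, F A -> F (fun w => A (tau x w)) /\ P (fun w => A (tau x w)) = P A) /\
  (forall A, F A -> (forall x w, A (tau x w) <-> A w) -> P A = 0 \/ P A = 1).

Definition hypA1 {d} {Omega : Type} (tau : vec d -> Omega -> Omega)
  (H : vec d -> vec d -> Omega -> R) : Prop :=
  forall p y z w, H p y (tau z w) = H p (vadd y z) w.

(* liminf_{|p|->oo} essinf_{(x,w)} |H(p,x,w)| = oo *)
Definition hypA2 {d} {Omega : Type} (F : (Omega -> Prop) -> Prop)
  (P : (Omega -> Prop) -> R) (H : vec d -> vec d -> Omega -> R) : Prop :=
  forall M : R, exists r : R, forall p, r <= vnorm p ->
    almost_surely F P (fun w => forall x, M <= Rabs (H p x w)).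

Definition modulus (rho : R -> R) : Prop :=
  forall eta, 0 < eta -> exists delta, 0 < delta /\
    forall r, 0 <= r -> r < delta -> Rabs (rho r) < eta.

(* compact sets K are represented by closed balls (every compact set lies in one,
   and closed balls are compact) *)
Definition hypA3 {d} {Omega : Type} (H : vec d -> vec d -> Omega -> R) : Prop :=
  (forall (w : Omega) (r : R), exists rho, modulus rho /\
     forall p q x y, vnorm p <= r -> vnorm q <= r ->
       Rabs (H p x w - H q y w) <= rho (vnorm (vsub p q) + vnorm (vsub x y))) /\
  (forall r : R, exists C, forall p x w, vnorm p <= r -> Rabs (H p x w) <= C).

Definition quasiconcave {d} {Omega : Type} (H : vec d -> vec d -> Omega -> R) : Prop :=
  forall x w c p q t, 0 <= t <= 1 -> c <= H p x w -> c <= H q x w ->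
    c <= H (vadd (vscale t p) (vscale (1 - t) q)) x w.

Definition superdiff {d} (f : vec d -> R) (x0 p : vec d) : Prop :=
  forall eta, 0 < eta -> exists delta, 0 < delta /\
    forall x, 0 < vnorm (vsub x x0) < delta ->
      f x - f x0 - dot p (vsub x x0) <= eta * vnorm (vsub x x0).

Definition subdiff {d} (f : vec d -> R) (x0 p : vec d) : Prop :=
  forall eta, 0 < eta -> exists delta, 0 < delta /\
    forall x, 0 < vnorm (vsub x x0) < delta ->
      f x - f x0 - dot p (vsub x x0) >= - eta * vnorm (vsub x x0).

Definition continuous_vec {d} (f : vec d -> R) : Prop :=
  forall x eta, 0 < eta -> exists delta, 0 < delta /\
    forall y, vnorm (vsub y x) < delta -> Rabs (f y - f x) < eta.

Definition viscosity_solution {d} {Omega : Type} (H : vec d -> vec d -> Omega -> R)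
  (lam : R) (p : vec d) (w : Omega) (v : vec d -> R) : Prop :=
  continuous_vec v /\
  (forall x q, superdiff v x q -> lam * v x + H (vadd p q) x w <= 0) /\
  (forall x q, subdiff v x q -> lam * v x + H (vadd p q) x w >= 0).

(* the class in which the solution is unique (comparison principle) *)
Definition bounded_unif_continuous {d} (f : vec d -> R) : Prop :=
  (exists C, forall x, Rabs (f x) <= C) /\
  (forall eta, 0 < eta -> exists delta, 0 < delta /\
    forall x y, vnorm (vsub y x) < delta -> Rabs (f y - f x) < eta).

Definition is_vlam {d} {Omega : Type} (H : vec d -> vec d -> Omega -> R)
  (v : R -> vec d -> vec d -> Omega -> R) : Prop :=
  forall lam p w, 0 < lam ->
    viscosity_solution H lam p w (fun x => v lam p x w) /\
    bounded_unif_continuous (fun x => v lam p x w).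

Definition effective_hamiltonian {d} {Omega : Type} (F : (Omega -> Prop) -> Prop)
  (P : (Omega -> Prop) -> R) (v : R -> vec d -> vec d -> Omega -> R)
  (Hbar : vec d -> R) : Prop :=
  forall p, almost_surely F P (fun w =>
    forall Rr, 0 < Rr -> forall eta, 0 < eta -> exists lam1, 0 < lam1 /\
      forall lam x, 0 < lam -> lam < lam1 -> vnorm x <= Rr / lam ->
        Rabs (lam * v lam p x w + Hbar p) <= eta).

(* Main.v *)
From HB Require Import structures.
Require Import Defs.
From mathcomp Require Import all_boot.
From Stdlib Require Import Reals Lra Lia Psatz FunctionalExtensionality ClassicalEpsilon Classical PropExtensionality ZArith.
Local Open Scope R_scope.


HB.instance Definition _ := Monoid.isComLaw.Build R 0 Rplus (fun a b c => esym (Rplus_assoc a b c)) Rplus_comm Rplus_0_l.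

Section V.
Variable d : nat.
Implicit Types p q r : vec d.

Lemma big_Rplus_ext (F G : 'I_d -> R) : (forall i, F i = G i) ->
  \big[Rplus/0]_(i < d) F i = \big[Rplus/0]_(i < d) G i.
Proof. move=> h; apply: eq_bigr => i _; apply: h. Qed.

Lemma big_Rplus_split (F G : 'I_d -> R) :
  \big[Rplus/0]_(i < d) (F i + G i) = \big[Rplus/0]_(i < d) F i + \big[Rplus/0]_(i < d) G i.
Proof. exact: big_split. Qed.

Lemma big_Rplus_scale (t : R) (F : 'I_d -> R) :
  \big[Rplus/0]_(i < d) (t * F i) = t * \big[Rplus/0]_(i < d) F i.
Proof.
elim/big_rec2: _ => [|i a b _ ->]; first by rewrite Rmult_0_r.
by rewrite Rmult_plus_distr_l.
Qed.

Lemma big_Rplus_le (F G : 'I_d -> R) : (forall i, F i <= G i) ->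
  \big[Rplus/0]_(i < d) F i <= \big[Rplus/0]_(i < d) G i.
Proof.
move=> h; elim/big_rec2: _ => [|i a b _ hab]; first lra.
by have := h i; lra.
Qed.

Lemma big_Rplus_ge0 (F : 'I_d -> R) : (forall i, 0 <= F i) ->
  0 <= \big[Rplus/0]_(i < d) F i.
Proof. by move=> h; elim/big_rec: _ => [|i a _ ha]; [lra | have := h i; lra]. Qed.

Lemma big_Rplus_const (c : R) : \big[Rplus/0]_(i < d) c = INR d * c.
Proof.
rewrite big_const_ord; elim: d => [|n IH]; first by rewrite /=; lra.
rewrite iterS IH S_INR; lra.
Qed.

Lemma big_Rplus_term (F : 'I_d -> R) j : (forall i, 0 <= F i) ->
  F j <= \big[Rplus/0]_(i < d) F i.
Proof.
move=> h; rewrite (bigD1 j) //=.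
have : 0 <= \big[Rplus/0]_(i < d | i != j) F i.
  by elim/big_rec: _ => [|i a _ ha]; [lra | have := h i; lra].
move=> hh; rewrite -{1}(Rplus_0_r (F j)); apply: Rplus_le_compat_l; exact: hh.
Qed.

Lemma dot_sym p q : dot p q = dot q p.
Proof. by apply: big_Rplus_ext => i; rewrite Rmult_comm. Qed.

Lemma dot_addl p q r : dot (vadd p q) r = dot p r + dot q r.
Proof. by rewrite /dot -big_Rplus_split; apply: big_Rplus_ext => i; rewrite /vadd; ring. Qed.

Lemma dot_subl p q r : dot (vsub p q) r = dot p r - dot q r.
Proof.
rewrite /dot.
have -> : \big[Rplus/0]_(i < d) (vsub p q i * r i) =
  \big[Rplus/0]_(i < d) (p i * r i + (-1) * (q i * r i)).
  by apply: big_Rplus_ext => i; rewrite /vsub; ring.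
rewrite big_Rplus_split big_Rplus_scale; ring.
Qed.

Lemma dot_scalel t p q : dot (vscale t p) q = t * dot p q.
Proof. by rewrite /dot -big_Rplus_scale; apply: big_Rplus_ext => i; rewrite /vscale; ring. Qed.

Lemma dot_addr p q r : dot r (vadd p q) = dot r p + dot r q.
Proof. by rewrite dot_sym dot_addl (dot_sym p) (dot_sym q). Qed.
Lemma dot_subr p q r : dot r (vsub p q) = dot r p - dot r q.
Proof. by rewrite dot_sym dot_subl (dot_sym p) (dot_sym q). Qed.
Lemma dot_scaler t p q : dot q (vscale t p) = t * dot q p.
Proof. by rewrite dot_sym dot_scalel dot_sym. Qed.

Lemma dot_zerol p : dot vzero p = 0.
Proof.
rewrite /dot (big_Rplus_ext _ (fun _ => 0)) ?big_Rplus_const; first lra.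
by move=> i; rewrite /vzero; ring.
Qed.
Lemma dot_zeror p : dot p vzero = 0.
Proof. by rewrite dot_sym dot_zerol. Qed.

Lemma dot_ge0 p : 0 <= dot p p.
Proof. by apply: big_Rplus_ge0 => i; nra. Qed.

Lemma vnorm_ge0 p : 0 <= vnorm p.
Proof. exact: sqrt_pos. Qed.

Lemma vnorm_sq p : vnorm p * vnorm p = dot p p.
Proof. by rewrite /vnorm sqrt_sqrt //; apply: dot_ge0. Qed.

Lemma vnorm_le_sq p (a : R) : 0 <= a -> dot p p <= a * a -> vnorm p <= a.
Proof.
move=> a0 h; rewrite /vnorm -(sqrt_square a) //; apply: sqrt_le_1_alt; lra.
Qed.

Lemma vnorm_lt_sq p (a : R) : 0 <= a -> dot p p < a * a -> vnorm p < a.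
Proof.
move=> a0 h; rewrite /vnorm -(sqrt_square a) //; apply: sqrt_lt_1_alt; split => //; apply: dot_ge0.
Qed.

Lemma sq_le_vnorm p (a : R) : 0 <= a -> a * a <= dot p p -> a <= vnorm p.
Proof.
move=> a0 h; rewrite /vnorm -(sqrt_square a) //; apply: sqrt_le_1_alt; lra.
Qed.

Lemma coord_le p i : Rabs (p i) <= vnorm p.
Proof.
apply: sq_le_vnorm; first exact: Rabs_pos.
rewrite -Rabs_mult Rabs_right; last nra.
by apply: (big_Rplus_term (fun i => p i * p i)) => j; nra.
Qed.

Lemma CS p q : Rabs (dot p q) <= vnorm p * vnorm q.
Proof.
have key : forall t, 0 <= dot p p - 2 * t * dot p q + t * t * dot q q.
  move=> t; have := dot_ge0 (vsub p (vscale t q)).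
  rewrite !dot_subl !dot_subr !dot_scalel !dot_scaler (dot_sym q p); lra.
have hp := vnorm_sq p; have hq := vnorm_sq q.
have np := vnorm_ge0 p; have nq := vnorm_ge0 q.
have hpq : dot p q * dot p q <= dot p p * dot q q.
  case: (Req_dec (dot q q) 0) => hq0.
  - have : dot p q = 0.
      case: (Req_dec (dot p q) 0) => // hne.
      have e : 2 * ((dot p p + 1) / (2 * dot p q)) * dot p q = dot p p + 1 by field.
      have := key ((dot p p + 1) / (2 * dot p q)); rewrite hq0 e; lra.
    move=> ->; have := dot_ge0 p; have := dot_ge0 q; nra.
  - have qpos : 0 < dot q q by have := dot_ge0 q; lra.
    have := key (dot p q / dot q q).
    have e1 : 2 * (dot p q / dot q q) * dot p q = 2 * (dot p q * dot p q) / dot q q by field; lra.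
    have e2 : dot p q / dot q q * (dot p q / dot q q) * dot q q = (dot p q * dot p q) / dot q q by field; lra.
    rewrite e1 e2 => h.
    have : 0 <= (dot p p * dot q q - dot p q * dot p q) / dot q q.
      have -> : (dot p p * dot q q - dot p q * dot p q) / dot q q = dot p p - 2 * (dot p q * dot p q) / dot q q + dot p q * dot p q / dot q q by field; lra.
      done.
    move=> h2; have := Rmult_le_pos _ _ h2 (Rlt_le _ _ qpos).
    have -> : (dot p p * dot q q - dot p q * dot p q) / dot q q * dot q q = dot p p * dot q q - dot p q * dot p q by field; lra.
    lra.
apply: Rsqr_incr_0_var; last by apply: Rmult_le_pos.
rewrite /Rsqr -Rabs_mult Rabs_right; last nra.
rewrite -hp -hq in hpq; nra.
Qed.

Lemma vnorm_triangle p q : vnorm (vadd p q) <= vnorm p + vnorm q.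
Proof.
apply: vnorm_le_sq; first by have := vnorm_ge0 p; have := vnorm_ge0 q; lra.
rewrite dot_addl !dot_addr (dot_sym q p) -!vnorm_sq.
have h := Rle_trans _ _ _ (Rle_abs _) (CS p q). nra.
Qed.

Lemma vnorm_scale t p : vnorm (vscale t p) = Rabs t * vnorm p.
Proof.
rewrite /vnorm dot_scalel dot_scaler -Rmult_assoc sqrt_mult_alt.
  by rewrite -(sqrt_Rsqr_abs t).
by have := Rle_0_sqr t; rewrite /Rsqr.
Qed.

End V.


Section Prob.
Variable Omega : Type.
Variable F : (Omega -> Prop) -> Prop.
Variable P : (Omega -> Prop) -> R.
Hypothesis hP : probability F P.

Lemma pext (A B : Omega -> Prop) : (forall w, A w <-> B w) -> A = B.
Proof. move=> h; apply: functional_extensionality => w; apply: propositional_extensionality; exact: h. Qed.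

Lemma F_True : F (fun _ => True).
Proof. by case: hP => [[h _] _]. Qed.
Lemma F_compl A : F A -> F (fun w => ~ A w).
Proof. by case: hP => [[_ [h _]] _]; apply: h. Qed.
Arguments F_compl [A].
Lemma F_union (A : nat -> Omega -> Prop) : (forall n, F (A n)) -> F (fun w => exists n, A n w).
Proof. by case: hP => [[_ [_ h]] _]; apply: h. Qed.
Lemma P_ge0 A : F A -> 0 <= P A.
Proof. by case: hP => [_ [h _]]; apply: h. Qed.
Lemma P_True : P (fun _ => True) = 1.
Proof. by case: hP => [_ [_ [h _]]]. Qed.
Lemma P_add (A : nat -> Omega -> Prop) :
  (forall n, F (A n)) -> (forall n m w, n <> m -> A n w -> A m w -> False) ->
  infinite_sum (fun n => P (A n)) (P (fun w => exists n, A n w)).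
Proof. by case: hP => [_ [_ [_ h]]]; apply: h. Qed.

Lemma F_False : F (fun _ => False).
Proof.
have -> : (fun _ : Omega => False) = (fun w => ~ (fun _ => True) w) by apply: pext => w; tauto.
apply: F_compl; exact: F_True.
Qed.

Lemma P_False : P (fun _ => False) = 0.
Proof.
have h := P_add (fun _ => fun _ => False) (fun _ => F_False) ltac:(by []).
have e : (fun w => exists n : nat, (fun _ : Omega => False) w) = (fun _ => False).
  by apply: pext => w; split => // [[]].
rewrite e in h.
set c := P (fun _ => False) in h *.
case: (Req_dec c 0) => // hc; exfalso.
have [N HN] := h (Rabs c / 2) ltac:(have := Rabs_pos_lt _ hc; lra).
have h1 := HN N (Nat.le_refl _); have h2 := HN (S N) (le_S _ _ (Nat.le_refl _)).
rewrite /Rdist in h1 h2. simpl in h2.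
set s := sum_f_R0 (fun _ : nat => c) N in h1 h2.
move: h1 h2 hc; rewrite /Rdist; split_Rabs; lra.
Qed.

Lemma sum_eventually (f : nat -> R) (l : R) (N : nat) :
  (forall n, (n >= N)%nat -> sum_f_R0 f n = l) -> infinite_sum f l.
Proof.
move=> h eps he; exists N => n hn; rewrite h; last by apply/leP. by rewrite /Rdist Rminus_diag Rabs_R0; lra.
Qed.

Lemma P_union2 A B : F A -> F B -> (forall w, A w -> B w -> False) ->
  P (fun w => A w \/ B w) = P A + P B.
Proof.
move=> hA hB hd.
pose S (n : nat) := match n with 0%nat => A | 1%nat => B | _ => fun _ => False end.
have hS : forall n, F (S n) by case=> [|[|n]] //=; exact: F_False.
have hdis : forall n m w, n <> m -> S n w -> S m w -> False.
  case=> [|[|n]] [|[|m]] w //= ne; try tauto; try (by move=> a b; apply: (hd w)); by move=> a b; apply: (hd w).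
have h := P_add S hS hdis.
have e : (fun w => exists n, S n w) = (fun w => A w \/ B w).
  apply: pext => w; split.
  - by case=> [[|[|n]]] /=; tauto.
  - by case=> h1; [exists 0%nat | exists 1%nat].
rewrite e in h; apply: (uniqueness_sum _ _ _ h).
apply: (sum_eventually _ _ 1) => n hn.
case: n hn => [//|n] _.
elim: n => [|n IH]; first by rewrite /= /S.
rewrite /= in IH *; rewrite IH.
by rewrite P_False; ring.
Qed.

Lemma P_compl A : F A -> P (fun w => ~ A w) = 1 - P A.
Proof.
move=> hA.
have := P_union2 A (fun w => ~ A w) hA (F_compl hA) ltac:(by move=> w).
have -> : (fun w => A w \/ ~ A w) = (fun _ => True) by apply: pext => w; split => // _; apply: classic.
rewrite P_True; lra.
Qed.

Lemma F_inter A B : F A -> F B -> F (fun w => A w /\ B w).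
Proof.
move=> hA hB.
have -> : (fun w => A w /\ B w) =
  (fun w => ~ (fun w => exists n : nat, (fun n => if n is 0%nat then (fun w => ~ A w) else (fun w => ~ B w)) n w) w).
  apply: pext => w; split.
  - by move=> [a b] [[|n] /=].
  - move=> h; split; apply: NNPP => hn; apply: h; [exists 0%nat | exists 1%nat] => //.
apply: F_compl; apply: F_union => -[|n]; exact: F_compl.
Qed.

Lemma P_mono A B : F A -> F B -> (forall w, A w -> B w) -> P A <= P B.
Proof.
move=> hA hB hAB.
have e : B = (fun w => A w \/ (B w /\ ~ A w)).
  apply: pext => w; split; last by case=> [/hAB|[]].
  by move=> b; case: (classic (A w)); tauto.
rewrite e P_union2 //.
- have := P_ge0 _ (F_inter _ _ hB (F_compl hA)); lra.
- exact: (F_inter _ _ hB (F_compl hA)).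
- by move=> w a [].
Qed.

Lemma least_ex (Q : nat -> Prop) n : Q n -> exists m, Q m /\ forall k, (k < m)%nat -> ~ Q k.
Proof.
elim/ltn_ind: n => n IH hn.
case: (classic (exists k, (k < n)%nat /\ Q k)) => [[k [hk qk]] | h].
- exact: IH k hk qk.
- by exists n; split => // k hk qk; apply: h; exists k.
Qed.

Lemma countable_inter (E : nat -> Omega -> Prop) :
  (forall n, F (E n) /\ P (E n) = 1) ->
  F (fun w => forall n, E n w) /\ P (fun w => forall n, E n w) = 1.
Proof.
move=> hE.
pose B (n : nat) := fun w => ~ E n w /\ (forall k, (k < n)%nat -> E k w).
have FB : forall n, F (B n).
  move=> n; apply: F_inter; first by apply: F_compl; case: (hE n).
  elim: n => [|n IH].
  - have -> : (fun w => forall k, (k < 0)%nat -> E k w) = (fun _ => True).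
      by apply: pext => w; split => // _ k; rewrite ltn0.
    exact: F_True.
  - have -> : (fun w => forall k, (k < n.+1)%nat -> E k w) =
      (fun w => (forall k, (k < n)%nat -> E k w) /\ E n w).
      apply: pext => w; split.
      + by move=> h; split => [k hk|]; apply: h; [apply: ltnW | ].
      + move=> [h1 h2] k; rewrite ltnS leq_eqVlt => /orP [/eqP -> //|]; exact: h1.
    by apply: F_inter => //; case: (hE n).
have PB : forall n, P (B n) = 0.
  move=> n; apply: Rle_antisym; last exact: P_ge0.
  have := P_mono (B n) (fun w => ~ E n w) (FB n) (F_compl (proj1 (hE n))) ltac:(by move=> w []).
  by rewrite P_compl ?(proj2 (hE n)); [lra | case: (hE n)].
have hdis : forall n m w, n <> m -> B n w -> B m w -> False.
  move=> n m w nm [h1 h2] [h3 h4].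
  case: (ltngtP n m) => c.
  - by apply: h1; apply: h4.
  - by apply: h3; apply: h2.
  - by apply: nm; apply/eqP; rewrite c.
have hs := P_add B FB hdis.
have U0 : P (fun w => exists n, B n w) = 0.
  apply: (uniqueness_sum _ _ _ hs); apply: (sum_eventually _ _ 0) => n _.
  elim: n => [|n IH] /=; rewrite ?IH PB; ring.
have e : (fun w => forall n, E n w) = (fun w => ~ (fun w => exists n, B n w) w).
  apply: pext => w; split.
  - by move=> h [n [hn _]]; apply: hn.
  - move=> h n; apply: NNPP => hn; apply: h.
    have [m [hm hmin]] := least_ex (fun m => ~ E m w) n hn.
    exists m; split => // k hk; apply: NNPP; exact: hmin k hk.
rewrite e; split; first by apply: F_compl; apply: F_union.
rewrite P_compl ?U0; [ring|].
by apply: F_union.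
Qed.

Lemma as_countable (Q : nat -> Omega -> Prop) :
  (forall n, almost_surely F P (Q n)) -> almost_surely F P (fun w => forall n, Q n w).
Proof.
move=> h.
pose E n := proj1_sig (constructive_indefinite_description _ (h n)).
have hE : forall n, F (E n) /\ P (E n) = 1 /\ forall w, E n w -> Q n w.
  by move=> n; rewrite /E; case: constructive_indefinite_description.
have [h1 h2] := countable_inter E (fun n => conj (proj1 (hE n)) (proj1 (proj2 (hE n)))).
exists (fun w => forall n, E n w); split => //; split => // w hw n.
by apply: (proj2 (proj2 (hE n))).
Qed.

Lemma as_and (Q1 Q2 : Omega -> Prop) :
  almost_surely F P Q1 -> almost_surely F P Q2 -> almost_surely F P (fun w => Q1 w /\ Q2 w).
Proof.
move=> h1 h2.
have := as_countable (fun n => if n is 0%nat then Q1 else Q2) (fun n => if n is 0%nat then h1 else h2).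
case=> E [hE [hPE hQ]]; exists E; split => //; split => // w hw.
by split; [apply: (hQ w hw 0%nat) | apply: (hQ w hw 1%nat)].
Qed.


End Prob.


Lemma vnorm_coord_bound d (v : vec d) (a : R) : 0 <= a -> (forall i, Rabs (v i) <= a) ->
  vnorm v <= (INR d + 1) * a.
Proof.
move=> a0 h; apply: vnorm_le_sq; first by have := pos_INR d; nra.
apply: Rle_trans (_ : \big[Rplus/0]_(i < d) (a * a) <= _).
  by apply: big_Rplus_le => i; have := h i; split_Rabs; nra.
rewrite big_Rplus_const; have := pos_INR d; nra.
Qed.

Definition dseq (d : nat) (n : nat) : vec d :=
  match @unpickle ({ffun 'I_d -> nat * nat} * nat)%type n with
  | Some (f, m) => fun i => (INR (f i).1 - INR (f i).2) / INR m.+1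
  | None => vzero
  end.

Lemma Zsplit (z : Z) : IZR z = INR (Z.to_nat z) - INR (Z.to_nat (- z)).
Proof.
rewrite !INR_IZR_INZ -minus_IZR; f_equal; lia.
Qed.

Lemma dseq_dense d (p : vec d) eps : 0 < eps -> exists n, vnorm (vsub (dseq d n) p) < eps.
Proof.
move=> he.
have [m hm] : exists m : nat, (INR d + 1) / eps < INR m.
  have [h1 h2] := archimed ((INR d + 1) / eps).
  exists (Z.to_nat (up ((INR d + 1) / eps))).
  have h0 : 0 <= (INR d + 1) / eps.
    by apply: Rle_mult_inv_pos; [have := pos_INR d; lra | lra].
  have hz : (0 <= up ((INR d + 1) / eps))%Z by apply: le_IZR; lra.
  rewrite (INR_IZR_INZ (Z.to_nat _)) Z2Nat.id //.
pose z (i : 'I_d) := (up (p i * INR m.+1) - 1)%Z.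
pose f := [ffun i => (Z.to_nat (z i), Z.to_nat (- z i))].
exists (pickle (f, m)).
rewrite /dseq pickleK.
have mpos : 0 < INR m.+1 by apply: lt_0_INR; lia.
apply: Rle_lt_trans (vnorm_coord_bound _ _ (1 / INR m.+1) _ _) _.
- by apply: Rlt_le; apply: Rdiv_lt_0_compat; lra.
- move=> i; rewrite /vsub ffunE /= -Zsplit /z minus_IZR.
  have [h1 h2] := archimed (p i * INR m.+1).
  have e : (IZR (up (p i * INR m.+1)) - 1) / INR m.+1 - p i =
     (IZR (up (p i * INR m.+1)) - 1 - p i * INR m.+1) / INR m.+1 by field; lra.
  rewrite e /Rdiv Rabs_mult Rabs_inv (Rabs_right (INR m.+1)); last lra.
  apply: Rmult_le_compat_r; first by apply: Rlt_le; apply: Rinv_0_lt_compat.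
  by split_Rabs; lra.
- have hmS : INR m < INR m.+1 by apply: lt_INR; lia.
  have := pos_INR d.
  have h3 : (INR d + 1) < eps * INR m.
    have e : eps * ((INR d + 1) / eps) = INR d + 1 by field; lra.
    by have := Rmult_lt_compat_l eps _ _ he hm; rewrite e.
  have -> : (INR d + 1) * (1 / INR m.+1) = (INR d + 1) / INR m.+1 by field; lra.
  have e2 : (INR d + 1) / INR m.+1 = (INR d + 1) * / INR m.+1 by [].
  rewrite e2 => hd0; apply: (Rmult_lt_reg_r (INR m.+1)); first lra.
  rewrite Rmult_assoc Rinv_l; last lra.
  nra.
Qed.


Lemma nat_above (x : R) : exists n : nat, x < INR n.
Proof.
have [h1 h2] := archimed (Rmax x 0).
exists (Z.to_nat (up (Rmax x 0))).
have hz : (0 <= up (Rmax x 0))%Z by apply: le_IZR; have := Rmax_r x 0; lra.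
rewrite INR_IZR_INZ Z2Nat.id //; have := Rmax_l x 0; lra.
Qed.

Lemma inv_small (eps : R) : 0 < eps -> exists N : nat, forall n, (N <= n)%nat -> 1 / INR n.+1 < eps.
Proof.
move=> he; have [N hN] := nat_above (1 / eps); exists N => n hn.
have hle : INR N <= INR n by apply: le_INR; apply/leP.
have hp : 0 < INR n.+1 by apply: lt_0_INR; lia.
have hnS : INR n < INR n.+1 by apply: lt_INR; lia.
have e1 : 1 / eps * eps = 1 by field; lra.
have : 1 < INR n.+1 * eps.
  have := Rmult_lt_compat_r eps _ _ he hN; rewrite e1; nra.
move=> h; apply: (Rmult_lt_reg_r (INR n.+1)) => //.
have -> : 1 / INR n.+1 * INR n.+1 = 1 by field; lra.
lra.
Qed.

Definition incr (phi : nat -> nat) := forall n, (phi n < phi n.+1)%nat.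

Lemma incr_ge phi : incr phi -> forall n, (n <= phi n)%nat.
Proof. move=> h; elim=> [|n IH] //; apply: leq_ltn_trans IH (h n). Qed.

Lemma incr_comp phi psi : incr phi -> incr psi -> incr (fun n => phi (psi n)).
Proof.
move=> hp hq n.
have mono : forall a b, (a < b)%nat -> (phi a < phi b)%nat.
  move=> a b; elim: b => [//|b IH]; rewrite ltnS leq_eqVlt => /orP [/eqP ->|/IH h].
  - exact: hp.
  - exact: ltn_trans h (hp b).
exact: mono (hq n).
Qed.

Lemma BW1 (a : nat -> R) (B : R) : (forall n, Rabs (a n) <= B) ->
  exists phi l, incr phi /\ forall eps, 0 < eps -> exists N, forall n, (N <= n)%nat -> Rabs (a (phi n) - l) < eps.
Proof.
move=> hB.
have [l hl] := Bolzano_Weierstrass a (fun c => - B <= c <= B) (compact_P3 _ _)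
  ltac:(by move=> n; have := hB n; split_Rabs; lra).
have h : forall N k : nat, exists p, (N <= p)%nat /\ Rabs (a p - l) < 1 / INR k.+1.
  move=> N k.
  have hpos : 0 < 1 / INR k.+1 by apply: Rdiv_lt_0_compat; [lra | apply: lt_0_INR; lia].
  have [p [hp1 hp2]] := hl (fun y => Rabs (y - l) < 1 / INR k.+1) N
    ltac:(by exists (mkposreal _ hpos) => y).
  by exists p; split => //; apply/leP.
pose G N k := proj1_sig (constructive_indefinite_description _ (h N k)).
have hG : forall N k, (N <= G N k)%nat /\ Rabs (a (G N k) - l) < 1 / INR k.+1.
  by move=> N k; rewrite /G; case: constructive_indefinite_description.
pose fix phi n := match n with 0%nat => G 0%nat 0%nat | S m => G (phi m).+1 n end.
exists phi, l; split.
- by move=> n /=; have [h1 _] := hG (phi n).+1 n.+1.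
- move=> eps he; have [N hN] := inv_small eps he; exists N => n hn.
  have hn' : Rabs (a (phi n) - l) < 1 / INR n.+1.
    by case: n {hn} => [|n] /=; [apply: (proj2 (hG _ _)) | apply: (proj2 (hG _ _))].
  by apply: Rlt_trans hn' (hN n hn).
Qed.

Definition conv d (z : nat -> vec d) (l : vec d) :=
  forall eps, 0 < eps -> exists N, forall n, (N <= n)%nat -> vnorm (vsub (z n) l) < eps.

Lemma fin_choice_max d (P : 'I_d -> nat -> Prop) :
  (forall i N M, (N <= M)%nat -> P i N -> P i M) -> (forall i, exists N, P i N) ->
  exists N, forall i, P i N.
Proof.
move=> mono h.
pose Nf i := proj1_sig (constructive_indefinite_description _ (h i)).
exists (\max_(i < d) Nf i) => i; apply: (mono i (Nf i)).
- exact: (leq_bigmax_cond i).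
- by rewrite /Nf; case: constructive_indefinite_description.
Qed.

Lemma BWd d (z : nat -> vec d) (B : R) : (forall n, vnorm (z n) <= B) ->
  exists phi l, incr phi /\ conv d (fun n => z (phi n)) l.
Proof.
move=> hB.
have key : forall k, (k <= d)%nat -> exists phi (l : vec d), incr phi /\
   forall i : 'I_d, (i < k)%nat -> forall eps, 0 < eps -> exists N, forall n, (N <= n)%nat ->
     Rabs (z (phi n) i - l i) < eps.
  elim=> [|k IH] hk.
  - by exists (fun n => n), vzero; split => // n /=.
  - have [phi [l [hphi hl]]] := IH (ltnW hk).
    pose i0 : 'I_d := Ordinal hk.
    have [psi [l0 [hpsi hl0]]] := BW1 (fun n => z (phi n) i0) B
      ltac:(by move=> n; apply: Rle_trans (coord_le _ _ _) (hB _)).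
    exists (fun n => phi (psi n)), (fun i => if i == i0 then l0 else l i); split.
    + exact: incr_comp.
    + move=> i hi eps he; case: eqP => [->|ne].
      * by have [N hN] := hl0 eps he; exists N.
      * have hik : (i < k)%nat.
          rewrite ltnS leq_eqVlt in hi; case/orP: hi => // /eqP e.
          by exfalso; apply: ne; apply: val_inj.
        have [N hN] := hl i hik eps he; exists N => n hn; apply: hN.
        exact: leq_trans hn (incr_ge _ hpsi n).
have [phi [l [hphi hl]]] := key d (leqnn d).
exists phi, l; split => // eps he.
have hd : 0 < INR d + 1 by have := pos_INR d; lra.
have he' : 0 < eps / 2 / (INR d + 1) by apply: Rdiv_lt_0_compat; lra.
have [N hN] := fin_choice_max d
  (fun i N => forall n, (N <= n)%nat -> Rabs (z (phi n) i - l i) < eps / 2 / (INR d + 1))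
  ltac:(by move=> i N M hNM h n hn; apply: h; apply: leq_trans hNM hn)
  ltac:(by move=> i; apply: hl (ltn_ord i) _ he').
exists N => n hn.
apply: Rle_lt_trans (vnorm_coord_bound _ _ (eps / 2 / (INR d + 1)) _ _) _.
- lra.
- by move=> i; apply: Rlt_le; apply: hN.
- have -> : (INR d + 1) * (eps / 2 / (INR d + 1)) = eps / 2 by field; lra.
  lra.
Qed.

Definition closedS d (S : vec d -> Prop) :=
  forall z, (forall eps, 0 < eps -> exists z', S z' /\ vnorm (vsub z' z) < eps) -> S z.

Definition cont_at d (f : vec d -> R) (z : vec d) :=
  forall eps, 0 < eps -> exists delta, 0 < delta /\
    forall z', vnorm (vsub z' z) < delta -> Rabs (f z' - f z) < eps.

Lemma seq_limit_in d (S : vec d -> Prop) (z : nat -> vec d) l :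
  closedS d S -> (forall n, S (z n)) -> conv d z l -> S l.
Proof.
move=> hS hz hc; apply: hS => eps he; have [N hN] := hc eps he.
by exists (z N); split => //; apply: hN.
Qed.

Lemma EVT d (S : vec d -> Prop) (f : vec d -> R) :
  (exists z, S z) -> (exists B, forall z, S z -> vnorm z <= B) -> closedS d S ->
  (forall z, S z -> cont_at d f z) ->
  exists z0, S z0 /\ forall z, S z -> f z0 <= f z.
Proof.
move=> [z1 hz1] [B hB] hS hf.
have [m0 hm0] : exists m0, forall z, S z -> m0 <= f z.
  apply: NNPP => hn.
  have h : forall n : nat, exists z, S z /\ f z < - INR n.
    move=> n; apply: NNPP => hn2; apply: hn; exists (- INR n) => z hz.
    by apply: Rnot_lt_le => c; apply: hn2; exists z.
  pose zs n := proj1_sig (constructive_indefinite_description _ (h n)).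
  have hzs : forall n, S (zs n) /\ f (zs n) < - INR n.
    by move=> n; rewrite /zs; case: constructive_indefinite_description.
  have [phi [l [hphi hl]]] := BWd d (fun n => zs n) B (fun n => hB _ (proj1 (hzs n))).
  have Sl := seq_limit_in d S _ l hS (fun n => proj1 (hzs (phi n))) hl.
  have [de [hde hde2]] := hf l Sl 1 Rlt_0_1.
  have [N hN] := hl de hde.
  have [n1 hn1] := nat_above (- f l + 1).
  pose n := maxn N n1.
  have h1 := hde2 _ (hN n (leq_maxl _ _)).
  have h2 := proj2 (hzs (phi n)).
  have h3 : INR n1 <= INR (phi n).
    apply: le_INR; apply/leP; apply: leq_trans (leq_maxr N n1) (incr_ge _ hphi n).
  move: h1; split_Rabs; lra.
pose E := fun y => exists z, S z /\ y = - f z.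
have [s [hs1 hs2]] := completeness E
  ltac:(by exists (- m0) => y [z [hz ->]]; have := hm0 z hz; lra)
  ltac:(by exists (- f z1), z1).
have hlow : forall z, S z -> - s <= f z by move=> z hz; have := hs1 (- f z) (ex_intro _ z (conj hz erefl)); lra.
have h : forall n : nat, exists z, S z /\ f z < - s + 1 / INR n.+1.
  move=> n; apply: NNPP => hn; have hp : 0 < 1 / INR n.+1.
    by apply: Rdiv_lt_0_compat; [lra | apply: lt_0_INR; lia].
  have : s <= s - 1 / INR n.+1.
    apply: hs2 => y [z [hz ->]]; apply: Rnot_lt_le => c; apply: hn; exists z; split => //; lra.
  lra.
pose zs n := proj1_sig (constructive_indefinite_description _ (h n)).
have hzs : forall n, S (zs n) /\ f (zs n) < - s + 1 / INR n.+1.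
  by move=> n; rewrite /zs; case: constructive_indefinite_description.
have [phi [l [hphi hl]]] := BWd d (fun n => zs n) B (fun n => hB _ (proj1 (hzs n))).
have Sl := seq_limit_in d S _ l hS (fun n => proj1 (hzs (phi n))) hl.
exists l; split => // z hz; apply: Rle_trans (hlow z hz).
apply: Rnot_lt_le => c.
pose g := f l - - s.
have hg : 0 < g by rewrite /g; lra.
have [de [hde hde2]] := hf l Sl (g / 2) ltac:(lra).
have [N1 hN1] := hl de hde.
have [N2 hN2] := inv_small (g / 2) ltac:(lra).
pose n := maxn N1 N2.
have h1 := hde2 _ (hN1 n (leq_maxl _ _)).
have h2 := proj2 (hzs (phi n)).
have h3 := hN2 (phi n) (leq_trans (leq_maxr N1 N2) (incr_ge _ hphi n)).
move: h1; rewrite /g in h3 *; split_Rabs; lra.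
Qed.


Lemma vext d (p q : vec d) : (forall i, p i = q i) -> p = q.
Proof. move=> h; apply: functional_extensionality; exact: h. Qed.

Lemma vnorm_rev d (a b : vec d) : Rabs (vnorm a - vnorm b) <= vnorm (vsub a b).
Proof.
have h1 := vnorm_triangle _ (vsub a b) b.
have h2 := vnorm_triangle _ (vsub b a) a.
have e1 : vadd (vsub a b) b = a by apply: vext => i; rewrite /vadd /vsub; ring.
have e2 : vadd (vsub b a) a = b by apply: vext => i; rewrite /vadd /vsub; ring.
have e3 : vsub b a = vscale (-1) (vsub a b) by apply: vext => i; rewrite /vscale /vsub; ring.
rewrite e1 in h1; rewrite e2 e3 vnorm_scale Rabs_Ropp Rabs_R1 Rmult_1_l in h2.
split_Rabs; lra.
Qed.

Lemma vnorm_sub_sym d (a b : vec d) : vnorm (vsub a b) = vnorm (vsub b a).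
Proof.
have e3 : vsub b a = vscale (-1) (vsub a b) by apply: vext => i; rewrite /vscale /vsub; ring.
by rewrite e3 vnorm_scale Rabs_Ropp Rabs_R1 Rmult_1_l.
Qed.

Lemma cont_sq d (a : vec d -> R) z :
  (forall z', Rabs (a z' - a z) <= vnorm (vsub z' z)) -> cont_at d (fun z => a z * a z) z.
Proof.
move=> h eps he.
pose de := Rmin 1 (eps / (2 * Rabs (a z) + 2)).
have hpos : 0 < eps / (2 * Rabs (a z) + 2) by apply: Rdiv_lt_0_compat; [lra | have := Rabs_pos (a z); lra].
exists de; split; first by rewrite /de; apply: Rmin_glb_lt; lra.
move=> z' hz'.
have h1 := h z'.
have hd1 : de <= 1 := Rmin_l _ _.
have hd2 : de <= eps / (2 * Rabs (a z) + 2) := Rmin_r _ _.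
have hx : Rabs (a z' - a z) < de by lra.
have e : a z' * a z' - a z * a z = (a z' - a z) * (a z' - a z + 2 * a z) by ring.
rewrite e Rabs_mult.
have hb : Rabs (a z' - a z + 2 * a z) <= de + 2 * Rabs (a z).
  apply: Rle_trans (Rabs_triang _ _) _; rewrite Rabs_mult (Rabs_right 2); last lra; lra.
have hA : 0 <= Rabs (a z) := Rabs_pos _.
have e2 : eps / (2 * Rabs (a z) + 2) * (2 * Rabs (a z) + 2) = eps by field; lra.
apply: Rle_lt_trans (Rmult_le_compat _ _ _ _ (Rabs_pos _) (Rabs_pos _) (Rlt_le _ _ hx) hb) _.
have hde : 0 < de by rewrite /de; apply: Rmin_glb_lt; lra.
have : de * (de + 2 * Rabs (a z)) <= de * (2 * Rabs (a z) + 1) by nra.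
have : de * (2 * Rabs (a z) + 1) < eps / (2 * Rabs (a z) + 2) * (2 * Rabs (a z) + 2).
  nra.
lra.
Qed.

Lemma dot_expand d (a b : vec d) s :
  dot (vadd a (vscale s b)) (vadd a (vscale s b)) = dot a a + 2 * s * dot a b + s * s * dot b b.
Proof. rewrite !dot_addl !dot_addr !dot_scalel !dot_scaler (dot_sym _ b a); ring. Qed.

Definition convexS d (C : vec d -> Prop) :=
  forall z1 z2 t, 0 <= t <= 1 -> C z1 -> C z2 -> C (vadd (vscale t z1) (vscale (1 - t) z2)).

Lemma proj d (C : vec d -> Prop) (q : vec d) (r1 : R) :
  (exists z, C z) -> (exists B, forall z, C z -> vnorm z <= B) -> closedS d C ->
  convexS d C -> 0 < r1 -> (forall z, C z -> r1 <= vnorm (vsub z q)) ->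
  exists zs e, C zs /\ dot e e = 1 /\ dot e q <= dot e zs - r1 /\
    (forall z, C z -> dot e zs <= dot e z) /\
    (forall z, C z -> vnorm (vsub zs q) <= vnorm (vsub z q)).
Proof.
move=> hne hB hcl hcv hr1 hm.
have [zs [Czs hmin]] := EVT d C (fun z => vnorm (vsub z q) * vnorm (vsub z q)) hne hB hcl
  ltac:(move=> z _; apply: cont_sq => z'; apply: Rle_trans (vnorm_rev _ _ _) _;
        rewrite (_ : vsub (vsub z' q) (vsub z q) = vsub z' z);
        [exact: Rle_refl | by apply: vext => i; rewrite /vsub; ring]).
set n := vnorm (vsub zs q).
have hn : r1 <= n by apply: hm.
have hn0 : 0 < n by lra.
have var : forall z, C z -> 0 <= dot (vsub zs q) (vsub z zs).
  move=> z Cz; apply: Rnot_lt_le => hD.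
  set D := dot (vsub zs q) (vsub z zs) in hD.
  set N := dot (vsub z zs) (vsub z zs).
  have hN : 0 <= N by apply: dot_ge0.
  pose s := Rmin 1 (- D / (N + 1)).
  have hs0 : 0 < s by rewrite /s; apply: Rmin_glb_lt; [lra | apply: Rdiv_lt_0_compat; lra].
  have hs1 : s <= 1 := Rmin_l _ _.
  have hs2 : s <= - D / (N + 1) := Rmin_r _ _.
  have Cs := hcv z zs s (conj (Rlt_le _ _ hs0) hs1) Cz Czs.
  have := hmin _ Cs.
  rewrite !vnorm_sq.
  have e : vsub (vadd (vscale s z) (vscale (1 - s) zs)) q = vadd (vsub zs q) (vscale s (vsub z zs)).
    by apply: vext => i; rewrite /vsub /vadd /vscale; ring.
  rewrite e dot_expand -/D -/N.
  move=> h.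
  have h2 : 0 <= s * (2 * D + s * N) by nra.
  have h3 : 0 <= 2 * D + s * N by apply: (Rmult_le_reg_l s); lra.
  have h4 : s * N <= - D * N / (N + 1).
    have -> : - D * N / (N + 1) = (- D / (N + 1)) * N by field; lra.
    by apply: Rmult_le_compat_r.
  have h5 : - D * N / (N + 1) < - D.
    apply: (Rmult_lt_reg_r (N + 1)); first lra.
    have -> : - D * N / (N + 1) * (N + 1) = - D * N by field; lra.
    nra.
  lra.
pose e := vscale (1 / n) (vsub zs q).
exists zs, e; split => //; split; [|split; [|split]].
- rewrite /e dot_scalel dot_scaler -vnorm_sq -/n; field; lra.
- have : dot e zs - dot e q = n.
    rewrite -dot_subr /e dot_scalel -vnorm_sq -/n; field; lra.
  lra.
- move=> z Cz; have := var z Cz; rewrite dot_subr /e !dot_scalel.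
  have h1n : 0 < 1 / n by apply: Rdiv_lt_0_compat; lra.
  move=> h; have := Rmult_le_compat_l _ _ _ (Rlt_le _ _ h1n) h; nra.
- move=> z Cz; have := hmin z Cz; rewrite -/n => h.
  have := vnorm_ge0 _ (vsub z q); nra.
Qed.


Definition pcont d (h : vec d -> R) :=
  forall r, exists rho, modulus rho /\
    forall p q, vnorm p <= r -> vnorm q <= r -> Rabs (h p - h q) <= rho (vnorm (vsub p q)).

Lemma pcont_at d (h : vec d -> R) : pcont d h ->
  forall r eps, 0 < eps -> exists delta, 0 < delta /\
    forall p q, vnorm p <= r -> vnorm q <= r -> vnorm (vsub p q) < delta -> Rabs (h p - h q) < eps.
Proof.
move=> hc r eps he; have [rho [hmod hr]] := hc r.
have [de [hde hde2]] := hmod eps he.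
exists de; split => // p q hp hq hpq.
apply: Rle_lt_trans (hr p q hp hq) _.
apply: Rle_lt_trans (Rle_abs _) _; apply: hde2 => //; exact: vnorm_ge0.
Qed.

Lemma vnorm_vzero d : vnorm (@vzero d) = 0.
Proof. by rewrite /vnorm dot_zerol sqrt_0. Qed.

Lemma SEG d (h : vec d -> R) (M r : R) (a b : vec d) : pcont d h -> 0 < M ->
  (forall p, r <= vnorm p -> M <= Rabs (h p)) ->
  (forall s, 0 <= s <= 1 -> r <= vnorm (vadd a (vscale s (vsub b a)))) ->
  M <= h a -> M <= h b.
Proof.
move=> hc hM hcoer hpath ha.
pose g s := h (vadd a (vscale s (vsub b a))).
have g0 : g 0 = h a by rewrite /g (_ : vadd a (vscale 0 (vsub b a)) = a) //; apply: vext => i; rewrite /vadd /vscale; ring.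
have g1 : g 1 = h b by rewrite /g (_ : vadd a (vscale 1 (vsub b a)) = b) //; apply: vext => i; rewrite /vadd /vscale /vsub; ring.
have hb : M <= Rabs (h b) by rewrite -g1; apply: hcoer; apply: hpath; lra.
apply: Rnot_lt_le => hlt.
have hbn : h b < 0 by move: hb hlt; split_Rabs; lra.
have cg : continuity (fun s => - g s).
  move=> s0 eps he.
  set Rad := vnorm a + (Rabs s0 + 1) * vnorm (vsub b a).
  have [de [hde hde2]] := pcont_at d h hc Rad eps he.
  have hba := vnorm_ge0 _ (vsub b a).
  exists (Rmin 1 (de / (vnorm (vsub b a) + 1))); split.
    by apply: Rmin_glb_lt; [lra | apply: Rdiv_lt_0_compat; lra].
  move=> s [_ hs]; rewrite /dist /= /R_dist in hs *.
  have hs1 : Rabs (s - s0) < 1 := Rlt_le_trans _ _ _ hs (Rmin_l _ _).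
  have hs2 : Rabs (s - s0) < de / (vnorm (vsub b a) + 1) := Rlt_le_trans _ _ _ hs (Rmin_r _ _).
  have nb : forall t, Rabs t <= Rabs s0 + 1 -> vnorm (vadd a (vscale t (vsub b a))) <= Rad.
    move=> t ht; apply: Rle_trans (vnorm_triangle _ _ _) _; rewrite vnorm_scale /Rad.
    have := vnorm_ge0 _ a; nra.
  rewrite (_ : - g s - - g s0 = - (g s - g s0)); last ring.
  rewrite Rabs_Ropp; apply: hde2.
  + by apply: nb; move: hs1; split_Rabs; lra.
  + by apply: nb; lra.
  + rewrite (_ : vsub (vadd a (vscale s (vsub b a))) (vadd a (vscale s0 (vsub b a))) = vscale (s - s0) (vsub b a)).
      rewrite vnorm_scale.
      have e : de / (vnorm (vsub b a) + 1) * (vnorm (vsub b a) + 1) = de by field; lra.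
      have : Rabs (s - s0) * vnorm (vsub b a) <= Rabs (s - s0) * (vnorm (vsub b a) + 1).
        by have := Rabs_pos (s - s0); nra.
      have : Rabs (s - s0) * (vnorm (vsub b a) + 1) < de / (vnorm (vsub b a) + 1) * (vnorm (vsub b a) + 1).
        by apply: Rmult_lt_compat_r => //; lra.
      lra.
    by apply: vext => i; rewrite /vsub /vadd /vscale; ring.
have [z [hz gz]] := IVT (fun s => - g s) 0 1 cg Rlt_0_1 ltac:(cbv beta; rewrite g0; lra) ltac:(cbv beta; rewrite g1; lra).
have : M <= Rabs (g z) by apply: hcoer; apply: hpath.
have : g z = 0 by lra.
move=> ->; rewrite Rabs_R0; lra.
Qed.

Lemma radial d (h : vec d -> R) (M r : R) (p : vec d) : pcont d h -> 0 < M -> 0 < r ->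
  (forall p, r <= vnorm p -> M <= Rabs (h p)) ->
  r <= vnorm p -> M <= h p -> M <= h (vscale (r / vnorm p) p).
Proof.
move=> hc hM hr hcoer hp hhp.
have np : 0 < vnorm p by lra.
apply: (SEG d h M r p) => // s hs.
rewrite (_ : vadd p (vscale s (vsub (vscale (r / vnorm p) p) p)) = vscale (1 - s + s * (r / vnorm p)) p).
  rewrite vnorm_scale.
  have e : (1 - s + s * (r / vnorm p)) * vnorm p = (1 - s) * vnorm p + s * r by field; lra.
  have pos : 0 <= 1 - s + s * (r / vnorm p).
    have : 0 <= s * (r / vnorm p) by apply: Rmult_le_pos; [lra | apply: Rlt_le; apply: Rdiv_lt_0_compat].
    lra.
  rewrite Rabs_right; last lra.
  rewrite e; nra.
by apply: vext => i; rewrite /vsub /vadd /vscale; ring.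
Qed.

Definition bas d (k : 'I_d) : vec d := fun i => if i == k then 1 else 0.

Lemma dot_bas d (k : 'I_d) (v : vec d) : dot (bas d k) v = v k.
Proof.
rewrite /dot (bigD1 k) //= /bas eqxx Rmult_1_l.
rewrite (eq_bigr (fun _ => 0)); last by move=> i /negbTE ->; ring.
rewrite big1_eq; ring.
Qed.

Lemma vnorm0_zero d (p : vec d) : vnorm p = 0 -> p = vzero.
Proof.
move=> h; apply: vext => i; have := coord_le _ p i; rewrite h /vzero => hi.
have := Rabs_pos (p i); split_Rabs; lra.
Qed.

Lemma orth_norm d (p f : vec d) (al be : R) : dot p f = 0 ->
  dot (vadd (vscale al p) (vscale be f)) (vadd (vscale al p) (vscale be f)) =
  al * al * dot p p + be * be * dot f f.
Proof.
move=> h; rewrite !dot_addl !dot_addr !dot_scalel !dot_scaler (dot_sym _ f p) h; ring.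
Qed.

Lemma no_pos_far d' (h : vec d'.+2 -> R) (M r C0 : R) : pcont _ h -> 0 < M -> C0 < M ->
  (forall p, r <= vnorm p -> M <= Rabs (h p)) -> Rabs (h vzero) <= C0 ->
  (forall c p q t, 0 <= t <= 1 -> c <= h p -> c <= h q -> c <= h (vadd (vscale t p) (vscale (1 - t) q))) ->
  forall p1, r <= vnorm p1 -> h p1 < M.
Proof.
move=> hc hM hC0 hcoer h0 hq p1 hp1.
apply: Rnot_le_lt => hh.
case: (Req_dec (vnorm p1) 0) => hz.
  move: hh; rewrite (vnorm0_zero _ _ hz) => hh; move: h0; split_Rabs; lra.
have [k hk] : exists k, p1 k <> 0.
  apply: NNPP => hn; apply: hz; rewrite (_ : p1 = vzero) ?vnorm_vzero //.
  by apply: vext => i; apply: NNPP => c; apply: hn; exists i.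
pose j : 'I_d'.+2 := if k == ord0 then ord_max else ord0.
have hjk : j != k.
  rewrite /j; case: (eqVneq k ord0) => [->|hk0].
  - by apply/eqP => e; have := congr1 val e.
  - by rewrite eq_sym.
pose f := vsub (vscale (p1 j) (bas _ k)) (vscale (p1 k) (bas _ j)).
have fp : dot p1 f = 0.
  rewrite dot_sym dot_subl !dot_scalel !dot_bas; ring.
have ff : dot f f = p1 j * p1 j + p1 k * p1 k.
  rewrite /f dot_subl !dot_subr !dot_scalel !dot_scaler !dot_bas /bas eqxx.
  rewrite (negbTE hjk) (_ : (k == j) = false); last by apply/negbTE; rewrite eq_sym.
  rewrite eqxx; ring.
have np : 0 < vnorm p1 by have := vnorm_ge0 _ p1; lra.
have hkp : 0 < Rabs (p1 k) by apply: Rabs_pos_lt.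
pose L := (vnorm p1 + 1) / Rabs (p1 k).
have hL : vnorm p1 * vnorm p1 <= L * L * dot f f.
  rewrite ff.
  have e : L * Rabs (p1 k) = vnorm p1 + 1 by rewrite /L; field; lra.
  have : L * L * (p1 k * p1 k) = (vnorm p1 + 1) * (vnorm p1 + 1).
    have sq : Rabs (p1 k) * Rabs (p1 k) = p1 k * p1 k by split_Rabs; ring.
    by rewrite -e -sq; ring.
  nra.
have nrm : forall al be, (1 <= al * al \/ vnorm p1 * vnorm p1 <= be * be * dot f f) ->
    r <= vnorm (vadd (vscale al p1) (vscale be f)).
  move=> al be H; apply: Rle_trans hp1 _; apply: sq_le_vnorm; first lra.
  rewrite orth_norm // -vnorm_sq.
  have := dot_ge0 _ f; have := Rmult_le_pos _ _ (Rlt_le _ _ np) (Rlt_le _ _ np).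
  case: H => H; nra.
have hcoerM := hcoer.
have step1 : M <= h (vadd (vscale 1 p1) (vscale L f)).
  apply: (SEG _ h M r p1) => //.
  + move=> s hs; rewrite (_ : vadd p1 (vscale s (vsub (vadd (vscale 1 p1) (vscale L f)) p1)) = vadd (vscale 1 p1) (vscale (s * L) f)).
      by apply: nrm; left; lra.
    by apply: vext => i; rewrite /vsub /vadd /vscale; ring.
have step2 : M <= h (vadd (vscale (-1) p1) (vscale L f)).
  apply: (SEG _ h M r (vadd (vscale 1 p1) (vscale L f))) => //.
  move=> s hs; rewrite (_ : vadd (vadd (vscale 1 p1) (vscale L f)) (vscale s (vsub (vadd (vscale (-1) p1) (vscale L f)) (vadd (vscale 1 p1) (vscale L f)))) = vadd (vscale (1 - 2 * s) p1) (vscale L f)).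
    by apply: nrm; right.
  by apply: vext => i; rewrite /vsub /vadd /vscale; ring.
have step3 : M <= h (vscale (-1) p1).
  apply: (SEG _ h M r (vadd (vscale (-1) p1) (vscale L f))) => //.
  move=> s hs; rewrite (_ : vadd (vadd (vscale (-1) p1) (vscale L f)) (vscale s (vsub (vscale (-1) p1) (vadd (vscale (-1) p1) (vscale L f)))) = vadd (vscale (-1) p1) (vscale ((1 - s) * L) f)).
    by apply: nrm; left; lra.
  by apply: vext => i; rewrite /vsub /vadd /vscale; ring.
have := hq M p1 (vscale (-1) p1) (1/2) ltac:(lra) hh step3.
rewrite (_ : vadd (vscale (1 / 2) p1) (vscale (1 - 1 / 2) (vscale (-1) p1)) = vzero).
  by move: h0; split_Rabs; lra.
by apply: vext => i; rewrite /vsub /vadd /vscale /vzero; field.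
Qed.


Section Pr.
Variable d : nat.
Variable e : vec d.
Hypothesis he : dot e e = 1.

Definition Pr (h : vec d) : vec d := vsub h (vscale (dot e h) e).

Lemma Pr_e h : dot e (Pr h) = 0.
Proof. by rewrite /Pr dot_subr dot_scaler he; ring. Qed.

Lemma Pr_decomp h : h = vadd (vscale (dot e h) e) (Pr h).
Proof. by apply: vext => i; rewrite /Pr /vadd /vsub /vscale; ring. Qed.

Lemma pyth h : dot h h = dot e h * dot e h + dot (Pr h) (Pr h).
Proof.
set P := Pr h; set t := dot e h.
rewrite {1 2}(Pr_decomp h) -/P -/t.
have := Pr_e h; rewrite -/P => hP.
move: P t hP => P t hP.
rewrite !dot_addl !dot_addr !dot_scalel !dot_scaler he (dot_sym _ P e) hP; ring.
Qed.

Lemma Pr_sub a b : Pr (vsub a b) = vsub (Pr a) (Pr b).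
Proof. by apply: vext => i; rewrite /Pr /vsub /vscale dot_subr; ring. Qed.

Lemma Pr_add a b : Pr (vadd a b) = vadd (Pr a) (Pr b).
Proof. by apply: vext => i; rewrite /Pr /vsub /vadd /vscale dot_addr; ring. Qed.

Lemma Pr_le h : vnorm (Pr h) <= vnorm h.
Proof.
apply: vnorm_le_sq; first exact: vnorm_ge0.
rewrite vnorm_sq (pyth h); nra.
Qed.

Lemma Pr_line t : Pr (vscale t e) = vzero.
Proof. by apply: vext => i; rewrite /Pr /vsub /vscale /vzero dot_scaler he; ring. Qed.

Lemma vnorm_e : vnorm e = 1.
Proof. by rewrite /vnorm he sqrt_1. Qed.

Lemma dot_e_le h : Rabs (dot e h) <= vnorm h.
Proof. by have := CS _ e h; rewrite vnorm_e Rmult_1_l. Qed.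

Lemma vnorm_split h : vnorm h <= Rabs (dot e h) + vnorm (Pr h).
Proof.
rewrite {1}(Pr_decomp h); apply: Rle_trans (vnorm_triangle _ _ _) _.
by rewrite vnorm_scale vnorm_e Rmult_1_r; lra.
Qed.

End Pr.

Lemma cont_at_add d (f g : vec d -> R) z : cont_at d f z -> cont_at d g z -> cont_at d (fun y => f y + g y) z.
Proof.
move=> hf hg eps he.
have [d1 [h1 h1']] := hf (eps / 2) ltac:(lra).
have [d2 [h2 h2']] := hg (eps / 2) ltac:(lra).
exists (Rmin d1 d2); split; first by apply: Rmin_glb_lt.
move=> z' hz; have := h1' z' (Rlt_le_trans _ _ _ hz (Rmin_l _ _)); have := h2' z' (Rlt_le_trans _ _ _ hz (Rmin_r _ _)).
split_Rabs; lra.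
Qed.

Lemma cont_at_scale d (f : vec d -> R) (c : R) z : cont_at d f z -> cont_at d (fun y => c * f y) z.
Proof.
move=> hf eps he.
have [d1 [h1 h1']] := hf (eps / (Rabs c + 1)) ltac:(apply: Rdiv_lt_0_compat; [lra | have := Rabs_pos c; lra]).
exists d1; split => // z' hz.
rewrite -Rmult_minus_distr_l Rabs_mult.
have := h1' z' hz; have := Rabs_pos c; have := Rabs_pos (f z' - f z) => ha hc hb.
have e1 : eps / (Rabs c + 1) * (Rabs c + 1) = eps by field; lra.
have : Rabs c * Rabs (f z' - f z) <= Rabs (f z' - f z) * (Rabs c + 1) by nra.
have : Rabs (f z' - f z) * (Rabs c + 1) < eps / (Rabs c + 1) * (Rabs c + 1).
  by apply: Rmult_lt_compat_r => //; lra.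
lra.
Qed.

Lemma cont_at_lip d (a : vec d -> R) z :
  (forall z', Rabs (a z' - a z) <= vnorm (vsub z' z)) -> cont_at d a z.
Proof.
move=> h eps he; exists eps; split => // z' hz; apply: Rle_lt_trans (h z') hz.
Qed.

Lemma closed_le d (g : vec d -> R) (c : R) y :
  (forall z', Rabs (g z' - g y) <= vnorm (vsub z' y)) ->
  (forall eps, 0 < eps -> exists y', c <= g y' /\ vnorm (vsub y' y) < eps) -> c <= g y.
Proof.
move=> hl h; apply: Rnot_lt_le => hc.
have [y' [h1 h2]] := h (c - g y) ltac:(lra).
have := hl y'; split_Rabs; lra.
Qed.

Lemma closed_ge d (g : vec d -> R) (c : R) y :
  (forall z', Rabs (g z' - g y) <= vnorm (vsub z' y)) ->
  (forall eps, 0 < eps -> exists y', g y' <= c /\ vnorm (vsub y' y) < eps) -> g y <= c.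
Proof.
move=> hl h; apply: Rnot_lt_le => hc.
have [y' [h1 h2]] := h (g y - c) ltac:(lra).
have := hl y'; split_Rabs; lra.
Qed.

Lemma vsub_sub d (a b x : vec d) : vsub (vsub a x) (vsub b x) = vsub a b.
Proof. by apply: vext => i; rewrite /vsub; ring. Qed.


Lemma dot_add_sq d (A B : vec d) : dot (vadd A B) (vadd A B) = dot A A + 2 * dot A B + dot B B.
Proof. rewrite !dot_addl !dot_addr (dot_sym _ B A); ring. Qed.

Lemma DET d (u : vec d -> R) (x q e : vec d) (al s : R) :
  bounded_unif_continuous u -> superdiff u x q -> dot e e = 1 -> dot e q < al -> 0 < s ->
  (forall y z, vnorm (vsub y x) < s -> subdiff u y z -> al <= dot e z) -> False.
Proof.
move=> [[Cu hCu] huc] hsup he heq hs hyp.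
have Cu0 : 0 <= Cu by have := hCu x; have := Rabs_pos (u x); lra.
set a1 := dot e q + (al - dot e q) / 3.
set a2 := dot e q + 2 * (al - dot e q) / 3.
have ha12 : a1 < a2 by rewrite /a1 /a2; lra.
have ha2 : a2 < al by rewrite /a2; lra.
have [d1 [hd1 hd1']] := hsup (a1 - dot e q) ltac:(rewrite /a1; lra).
set T := Rmin d1 s / 3.
have hT : 0 < T by rewrite /T; have := Rmin_glb_lt _ _ _ hd1 hs; lra.
have hTd1 : 3 * T <= d1 by rewrite /T; have := Rmin_l d1 s; lra.
have hTs : 3 * T <= s by rewrite /T; have := Rmin_r d1 s; lra.
set K := (2 * Cu + Rabs a2 * T + 1) / (T * T).
have hK : K * (T * T) = 2 * Cu + Rabs a2 * T + 1 by rewrite /K; field; lra.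
have Kpos : 0 < K.
  rewrite /K; apply: Rdiv_lt_0_compat; last nra.
  have := Rabs_pos a2; nra.
set t1 := Rmin (T / 2) ((a2 - a1) / (2 * K)).
have ht1 : 0 < t1 by rewrite /t1; apply: Rmin_glb_lt; [lra | apply: Rdiv_lt_0_compat; lra].
have ht1T : t1 <= T / 2 := Rmin_l _ _.
have ht1K : t1 <= (a2 - a1) / (2 * K) := Rmin_r _ _.
have ht1K' : K * t1 <= (a2 - a1) / 2.
  have e1 : K * ((a2 - a1) / (2 * K)) = (a2 - a1) / 2 by field; lra.
  rewrite -e1; apply: Rmult_le_compat_l => //; lra.
set x1 := vadd x (vscale t1 e).
have ex1 : vsub x1 x = vscale t1 e by apply: vext => i; rewrite /x1 /vsub /vadd /vscale; ring.
have ux1 : u x1 <= u x + a1 * t1.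
  have nx1 : vnorm (vsub x1 x) = t1 by rewrite ex1 vnorm_scale (vnorm_e _ _ he) Rabs_right; lra.
  have := hd1' x1 ltac:(rewrite nx1; lra).
  rewrite nx1 ex1 dot_scaler (dot_sym _ q e) /a1; nra.
set gam := (a2 - a1) * t1 / 2.
have hgam : 0 < gam by rewrite /gam; nra.
have [du [hdu hdu']] := huc (gam / 2) ltac:(lra).
set rho := Rmin T (du / 2).
have hrho : 0 < rho by rewrite /rho; apply: Rmin_glb_lt; lra.
have hrhoT : rho <= T := Rmin_l _ _.
have hrhodu : rho < du by rewrite /rho; have := Rmin_r T (du / 2); lra.
set k := gam / (rho * rho).
have hk : k * (rho * rho) = gam by rewrite /k; field; lra.
have kpos : 0 < k by rewrite /k; apply: Rdiv_lt_0_compat; nra.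
set tt := fun y => dot e (vsub y x).
set nn := fun y => vnorm (Pr d e (vsub y x)).
have ltt : forall y y', Rabs (tt y' - tt y) <= vnorm (vsub y' y).
  move=> y y'; rewrite /tt -dot_subr vsub_sub; exact: dot_e_le.
have lnn : forall y y', Rabs (nn y' - nn y) <= vnorm (vsub y' y).
  move=> y y'; rewrite /nn; apply: Rle_trans (vnorm_rev _ _ _) _.
  rewrite -Pr_sub vsub_sub; exact: Pr_le.
set psi := fun y => u y + (- a2) * tt y + K * (tt y * tt y) + k * (nn y * nn y).
set S := fun y => (0 <= tt y /\ tt y <= T) /\ nn y <= rho.
have Sx : S x.
  rewrite /S /tt /nn (_ : vsub x x = vscale 0 e); last by apply: vext => i; rewrite /vsub /vscale; ring.
  by rewrite Pr_line // vnorm_vzero dot_scaler he; lra.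
have Sx1 : S x1.
  rewrite /S /tt /nn ex1 Pr_line // vnorm_vzero dot_scaler he; lra.
have hbound : forall y, S y -> vnorm (vsub y x) <= 2 * T.
  move=> y [[h1 h2] h3]; apply: Rle_trans (vnorm_split _ e he _) _.
  rewrite /tt /nn in h1 h2 h3; rewrite Rabs_right; lra.
have [ys [Sys hmin]] : exists ys, S ys /\ forall y, S y -> psi ys <= psi y.
  apply: EVT.
  - by exists x.
  - exists (vnorm x + 2 * T) => y Sy.
    have := vnorm_triangle _ (vsub y x) x; rewrite (_ : vadd (vsub y x) x = y); last by apply: vext => i; rewrite /vadd /vsub; ring.
    have := hbound y Sy; lra.
  - move=> y hy; split; first split.
    + apply: (closed_le _ tt 0 y (fun z' => ltt y z')) => eps hep.
      by have [y' [[[? ?] ?] ?]] := hy eps hep; exists y'.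
    + apply: (closed_ge _ tt T y (fun z' => ltt y z')) => eps hep.
      by have [y' [[[? ?] ?] ?]] := hy eps hep; exists y'.
    + apply: (closed_ge _ nn rho y (fun z' => lnn y z')) => eps hep.
      by have [y' [[[? ?] ?] ?]] := hy eps hep; exists y'.
  - move=> y _; rewrite /psi.
    apply: cont_at_add; [apply: cont_at_add; [apply: cont_at_add|]|].
    + by move=> eps hep; have [dd [hdd hdd']] := huc eps hep; exists dd; split => // z' hz; apply: hdd'.
    + by apply: cont_at_scale; apply: cont_at_lip => z'; apply: ltt.
    + by apply: cont_at_scale; apply: cont_sq => z'; apply: ltt.
    + by apply: cont_at_scale; apply: cont_sq => z'; apply: lnn.
move: Sys => [[hts0 htsT] hns].
set ts := tt ys in hts0 htsT.
set ns := nn ys in hns.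
have psix1 : psi x1 <= u x - gam.
  rewrite /psi /tt /nn ex1 Pr_line // vnorm_vzero dot_scaler he /gam.
  have : K * (t1 * 1 * (t1 * 1)) <= (a2 - a1) / 2 * t1 by nra.
  nra.
have psiys := hmin x1 Sx1.
have nn0 : 0 <= ns by rewrite /ns /nn; exact: vnorm_ge0.
have tspos : 0 < ts.
  apply: Rnot_le_lt => h0; have t0 : ts = 0 by lra.
  have hyx : vnorm (vsub ys x) < du.
    apply: Rle_lt_trans (vnorm_split _ e he _) _.
    rewrite -/(tt ys) -/(nn ys) -/ts -/ns t0 Rabs_R0; lra.
  have := hdu' x ys hyx.
  have : psi ys = u ys + k * (ns * ns) by rewrite /psi -/ts -/ns t0; ring.
  have : 0 <= k * (ns * ns) by nra.
  move=> ? ? ?; split_Rabs; lra.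
have tsT : ts < T.
  apply: Rnot_le_lt => h0; have t0 : ts = T by lra.
  have : psi ys = u ys + - a2 * T + K * (T * T) + k * (ns * ns) by rewrite /psi -/ts -/ns t0.
  have := hCu ys; have := hCu x; have := Rle_abs a2; have := Rle_abs (- a2); rewrite Rabs_Ropp.
  have : 0 <= k * (ns * ns) by nra.
  move=> ? ? ? ? ?; rewrite hK; split_Rabs; nra.
have nsr : ns < rho.
  apply: Rnot_le_lt => h0; have n0 : ns = rho by lra.
  set y' := vadd x (vscale ts e).
  have ey' : vsub y' x = vscale ts e by apply: vext => i; rewrite /y' /vsub /vadd /vscale; ring.
  have Sy' : S y'.
    by rewrite /S /tt /nn ey' Pr_line // vnorm_vzero dot_scaler he; lra.
  have eyy : vsub ys y' = Pr d e (vsub ys x).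
    by apply: vext => i; rewrite /y' /Pr /vsub /vadd /vscale -/(tt ys) -/ts; ring.
  have hyy : vnorm (vsub ys y') < du by rewrite eyy -/(nn ys) -/ns; lra.
  have := hdu' y' ys hyy.
  have := hmin y' Sy'.
  have : psi y' = u y' + - a2 * ts + K * (ts * ts) by rewrite /psi /tt /nn ey' Pr_line // vnorm_vzero dot_scaler he; ring.
  have : psi ys = u ys + - a2 * ts + K * (ts * ts) + k * (rho * rho) by rewrite /psi -/ts -/ns n0.
  rewrite hk; move=> ? ? ? ?; split_Rabs; lra.
set g := vsub (vscale (a2 - 2 * K * ts) e) (vscale (2 * k) (Pr d e (vsub ys x))).
have hsub : subdiff u ys g.
  move=> eta heta.
  set r0 := Rmin (Rmin ts (T - ts)) (rho - ns).
  have hr0 : 0 < r0 by rewrite /r0; repeat apply: Rmin_glb_lt; lra.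
  exists (Rmin r0 (eta / (K + k + 1))); split.
    by apply: Rmin_glb_lt => //; apply: Rdiv_lt_0_compat; lra.
  move=> y [hy0 hy1].
  have hyr0 : vnorm (vsub y ys) < r0 := Rlt_le_trans _ _ _ hy1 (Rmin_l _ _).
  have hyeta : vnorm (vsub y ys) < eta / (K + k + 1) := Rlt_le_trans _ _ _ hy1 (Rmin_r _ _).
  have r0a : r0 <= ts by rewrite /r0; have := Rmin_l (Rmin ts (T - ts)) (rho - ns); have := Rmin_l ts (T - ts); lra.
  have r0b : r0 <= T - ts by rewrite /r0; have := Rmin_l (Rmin ts (T - ts)) (rho - ns); have := Rmin_r ts (T - ts); lra.
  have r0c : r0 <= rho - ns := Rmin_r _ _.
  have Sy : S y.
    have := ltt ys y; have := lnn ys y; rewrite -/ts -/ns => h1 h2.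
    split; [split|]; move: h1 h2; split_Rabs; lra.
  have hm := hmin y Sy.
  set D := vsub y ys.
  have eh : vsub y x = vadd (vsub ys x) D by apply: vext => i; rewrite /D /vadd /vsub; ring.
  have et : tt y = ts + dot e D by rewrite /tt eh dot_addr.
  have ePh : Pr d e (vsub y x) = vadd (Pr d e (vsub ys x)) (Pr d e D) by rewrite eh Pr_add.
  pose P0 := Pr d e (vsub ys x); rewrite -/P0 in ePh.
  have hP0e : dot P0 e = 0 by rewrite dot_sym /P0 Pr_e.
  have hP0D : dot P0 (Pr d e D) = dot P0 D.
    rewrite /Pr dot_subr dot_scaler hP0e; ring.
  have en : nn y * nn y = ns * ns + 2 * dot P0 D + dot (Pr d e D) (Pr d e D).
    rewrite /nn ePh vnorm_sq dot_add_sq hP0D; have : ns * ns = dot P0 P0 by rewrite /ns /nn vnorm_sq.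
    lra.
  have hps : psi y = u y + - a2 * (ts + dot e D) + K * ((ts + dot e D) * (ts + dot e D)) +
       k * (ns * ns + 2 * dot P0 D + dot (Pr d e D) (Pr d e D)) by rewrite /psi et en.
  have hpys : psi ys = u ys + - a2 * ts + K * (ts * ts) + k * (ns * ns) by [].
  have egD : dot g D = (a2 - 2 * K * ts) * dot e D - 2 * k * dot P0 D.
    by rewrite /g dot_subl !dot_scalel -/P0.
  have hpy := pyth d e he D.
  have hDD : dot D D = vnorm D * vnorm D by rewrite vnorm_sq.
  have hPP := dot_ge0 _ (Pr d e D).
  have hnD := vnorm_ge0 _ D.
  have hq2 : K * (dot e D * dot e D) + k * dot (Pr d e D) (Pr d e D) <= (K + k) * (vnorm D * vnorm D).
    have : dot e D * dot e D <= vnorm D * vnorm D by nra.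
    have : dot (Pr d e D) (Pr d e D) <= vnorm D * vnorm D by have := Rle_0_sqr (dot e D); rewrite /Rsqr; nra.
    nra.
  have hq3 : (K + k) * (vnorm D * vnorm D) <= eta * vnorm D.
    have : (K + k) * vnorm D <= eta.
      have e1 : eta / (K + k + 1) * (K + k + 1) = eta by field; lra.
      have hye : vnorm D < eta / (K + k + 1) := hyeta.
      have : vnorm D * (K + k + 1) <= eta / (K + k + 1) * (K + k + 1) by apply: Rmult_le_compat_r; lra.
      nra.
    nra.
  rewrite egD; nra.
have := hyp ys g ltac:(apply: Rle_lt_trans (vnorm_split _ e he _) _; rewrite -/(tt ys) -/(nn ys) -/ts -/ns Rabs_right; lra) hsub.
rewrite /g dot_subr !dot_scaler he Pr_e // Rmult_0_r Rminus_0_r Rmult_1_r.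
nra.
Qed.


Lemma vsub_same d (y : vec d) : vnorm (vsub y y) = 0.
Proof.
rewrite (_ : vsub y y = vzero) ?vnorm_vzero //.
by apply: vext => i; rewrite /vsub /vzero; ring.
Qed.

Lemma coer_all d (G : vec d -> vec d -> R) :
  (forall r, exists rho, modulus rho /\ forall p q x, vnorm p <= r -> vnorm q <= r ->
      Rabs (G p x - G q x) <= rho (vnorm (vsub p q))) ->
  (forall M : nat, exists r, forall n, r <= vnorm (dseq d n) -> forall x, INR M <= Rabs (G (dseq d n) x)) ->
  forall M, exists r, forall p x, r <= vnorm p -> M <= Rabs (G p x).
Proof.
move=> hc hd M.
have [M' hM'] := nat_above (M + 1).
have [r hr] := hd M'.
exists (r + 1) => p x hp.
have [rho [hmod hrho]] := hc (vnorm p + 1).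
have [de [hde hde']] := hmod 1 Rlt_0_1.
have [n hn] := dseq_dense d p (Rmin de 1) ltac:(by apply: Rmin_glb_lt; lra).
have hn1 : vnorm (vsub (dseq d n) p) < 1 := Rlt_le_trans _ _ _ hn (Rmin_r _ _).
have hn2 : vnorm (vsub (dseq d n) p) < de := Rlt_le_trans _ _ _ hn (Rmin_l _ _).
have hrev := vnorm_rev _ (dseq d n) p.
have hdn : r <= vnorm (dseq d n) by move: hrev; split_Rabs; lra.
have := hr n hdn x.
have := hrho (dseq d n) p x ltac:(move: hrev; split_Rabs; lra) ltac:(lra).
have := hde' (vnorm (vsub (dseq d n) p)) (vnorm_ge0 _ _) hn2.
move=> h1 h2 h3.
have : Rabs (G (dseq d n) x - G p x) < 1 by apply: Rle_lt_trans h2 (Rle_lt_trans _ _ _ (Rle_abs _) h1).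
move: h3; split_Rabs; lra.
Qed.

Lemma dot_d0 d (v : vec d) : d = 0%nat -> vnorm v = 0.
Proof. by move=> hd; subst d; rewrite /vnorm /dot big_ord0 sqrt_0. Qed.

Lemma vnorm_1 d (e m : vec d) : d = 1%nat -> dot e e = 1 -> vnorm m = Rabs (dot e m).
Proof.
move=> hd; subst d; rewrite /vnorm /dot !big_ord1 => he.
have h1 : Rabs (e ord0) = 1.
  have := Rabs_pos (e ord0); have : Rabs (e ord0) * Rabs (e ord0) = 1 by rewrite -Rabs_mult he Rabs_R1.
  nra.
rewrite Rabs_mult h1 Rmult_1_l -(sqrt_Rsqr_abs (m ord0)) /Rsqr //.
Qed.

Lemma no_pos_far_gen d : (1 < d)%nat -> forall (h : vec d -> R) (M r C0 : R), pcont _ h -> 0 < M -> C0 < M ->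
  (forall p, r <= vnorm p -> M <= Rabs (h p)) -> Rabs (h vzero) <= C0 ->
  (forall c p q t, 0 <= t <= 1 -> c <= h p -> c <= h q -> c <= h (vadd (vscale t p) (vscale (1 - t) q))) ->
  forall p1, r <= vnorm p1 -> h p1 < M.
Proof.
move=> hd; case: d hd => [|n] hd; first by [].
case: n hd => [|m] hd; first by [].
exact: no_pos_far.
Qed.

Lemma as_weaken Omega (F : (Omega -> Prop) -> Prop) P (Q1 Q2 : Omega -> Prop) :
  almost_surely F P Q1 -> (forall w, Q1 w -> Q2 w) -> almost_surely F P Q2.
Proof. by move=> [E [h1 [h2 h3]]] h; exists E; split => //; split => // w /h3 /h. Qed.

Lemma coer_event d Omega (F : (Omega -> Prop) -> Prop) P (H : vec d -> vec d -> Omega -> R) :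
  probability F P -> hypA2 F P H ->
  almost_surely F P (fun w => forall M : nat, exists r, forall n, r <= vnorm (dseq d n) ->
     forall x, INR M <= Rabs (H (dseq d n) x w)).
Proof.
move=> hP hA2.
apply: as_countable => // M.
have [r hr] := hA2 (INR M).
have hh : almost_surely F P (fun w => forall n, r <= vnorm (dseq d n) -> forall x, INR M <= Rabs (H (dseq d n) x w)).
  apply: as_countable => // n.
  case: (Rle_dec r (vnorm (dseq d n))) => h.
  - by apply: as_weaken (hr _ h) _ => w hw _.
  - exists (fun _ => True); split; first exact: (F_True _ _ _ hP).
    split; first exact: (P_True _ _ _ hP).
    by move=> w _ h'; exfalso; apply: h.
by apply: as_weaken hh _ => w hw; exists r.
Qed.


Lemma vnorm_sub_le d (a b : vec d) : vnorm (vsub a b) <= vnorm a + vnorm b.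
Proof.
rewrite (_ : vsub a b = vadd a (vscale (-1) b)); last by apply: vext => i; rewrite /vsub /vadd /vscale; ring.
apply: Rle_trans (vnorm_triangle _ _ _) _; rewrite vnorm_scale Rabs_Ropp Rabs_R1; lra.
Qed.

Lemma vnorm_decomp d (a b : vec d) : vnorm a <= vnorm (vsub a b) + vnorm b.
Proof.
rewrite {1}(_ : a = vadd (vsub a b) b); last by apply: vext => i; rewrite /vsub /vadd; ring.
exact: vnorm_triangle.
Qed.

Lemma vnorm_add_le d (a b : vec d) : vnorm (vadd a b) <= vnorm a + vnorm b.
Proof. exact: vnorm_triangle. Qed.

Theorem mainTheorem9 (d : nat) (Omega : Type) (F : (Omega -> Prop) -> Prop)
  (P : (Omega -> Prop) -> R) (tau : vec d -> Omega -> Omega)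
  (H : vec d -> vec d -> Omega -> R)
  (v : R -> vec d -> vec d -> Omega -> R) (Hbar : vec d -> R) (p0 : vec d) :
  probability F P ->
  ergodic_group F P tau ->
  quasiconcave H -> hypA1 tau H -> hypA2 F P H -> hypA3 H ->
  is_vlam H v ->
  effective_hamiltonian F P v Hbar ->
  exists Omt : Omega -> Prop, F Omt /\ P Omt = 1 /\
    forall eps Rr w, 0 < eps < 1 -> 0 < Rr -> Omt w ->
      exists lam0, 0 < lam0 /\
        forall lam x q, 0 < lam -> lam < lam0 -> vnorm x < Rr / lam ->
          superdiff (fun y => v lam p0 y w) x q ->
          H (vadd p0 q) x w > Hbar p0 - eps.
Proof.
move=> hP herg hqc hA1 hA2 [hA3a hA3b] hv heff.
have [E1 [FE1 [PE1 hE1]]] := heff p0.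
have [E2 [FE2 [PE2 hE2]]] := coer_event d Omega F P H hP hA2.
pose En (n : nat) := if n is 0%nat then E1 else E2.
have hEn : forall n, F (En n) /\ P (En n) = 1 by case.
have [FO PO] := countable_inter Omega F P hP En hEn.
exists (fun w => forall n, En n w); split => //; split => //.
move=> eps Rr w [he0 he1] hRr hw.
have w1 := hE1 w (hw 0%nat).
have w2 := hE2 w (hw 1%nat).
have [lam1 [hlam1 hlam1']] := w1 (Rr + 1) ltac:(lra) (eps / 4) ltac:(lra).
exists (Rmin lam1 1); split; first by apply: Rmin_glb_lt; lra.
move=> lam x q hlam hlam0 hx hsup.
have hlamA : lam < lam1 := Rlt_le_trans _ _ _ hlam0 (Rmin_l _ _).
have hlamB : lam < 1 := Rlt_le_trans _ _ _ hlam0 (Rmin_r _ _).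
set u := fun y => v lam p0 y w.
have [[_ [_ hsupsol]] hbuc] := hv lam p0 w hlam.
set c := Hbar p0 - eps / 4.
have key : forall y z, vnorm (vsub y x) < 1 -> subdiff u y z -> c <= H (vadd p0 z) y w.
  move=> y z hy hz.
  have hyb : vnorm y <= (Rr + 1) / lam.
    have := vnorm_decomp _ y x.
    have e1 : (Rr + 1) / lam = Rr / lam + 1 / lam by field; lra.
    have : 1 < 1 / lam.
      apply: (Rmult_lt_reg_r lam) => //.
      rewrite (_ : 1 / lam * lam = 1); [lra | field; lra].
    lra.
  have := hlam1' lam y hlam hlamA hyb.
  have := hsupsol y z hz.
  rewrite /c /=; split_Rabs; lra.
apply: Rnot_le_lt => hbad.
have hcq : H (vadd p0 q) x w <= c - 3 * eps / 4 by rewrite /c; lra.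
case: (eqVneq d 0%nat) => hd0.
  have : c <= H (vadd p0 q) x w.
    apply: key; first by rewrite vsub_same; lra.
    move=> eta heta; exists 1; split; first lra.
    by move=> y [hy _]; exfalso; rewrite (dot_d0 _ _ hd0) in hy; lra.
  lra.
have hdpos : (0 < d)%nat by rewrite lt0n.
have [C0 hC0] := hA3b 0.
have hC0' : forall y, Rabs (H vzero y w) <= C0.
  by move=> y; apply: hC0; rewrite vnorm_vzero; lra.
set M := Rmax C0 (Rabs c) + 1.
have hMC0 : C0 < M by rewrite /M; have := Rmax_l C0 (Rabs c); lra.
have hMc : Rabs c < M by rewrite /M; have := Rmax_r C0 (Rabs c); lra.
have hM0 : 0 < M by have := Rabs_pos c; lra.
have pcw : forall r, exists rho, modulus rho /\ forall p q y, vnorm p <= r -> vnorm q <= r ->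
    Rabs (H p y w - H q y w) <= rho (vnorm (vsub p q)).
  move=> r; have [rho [hm hr]] := hA3a w r; exists rho; split => // p q' y hp hq.
  by have := hr p q' y y hp hq; rewrite vsub_same Rplus_0_r.
have pch : forall y, pcont d (fun p => H p y w).
  move=> y r; have [rho [hm hr]] := pcw r; exists rho; split => // p q' hp hq; exact: hr.
have qch : forall y c' p q' t, 0 <= t <= 1 -> c' <= H p y w -> c' <= H q' y w ->
    c' <= H (vadd (vscale t p) (vscale (1 - t) q')) y w.
  by move=> y c' p q' t ht h1 h2; apply: hqc.
have [r0 hr0] := coer_all d (fun p y => H p y w) pcw w2 M.
set r := Rmax r0 1.
have hr1 : 1 <= r := Rmax_r _ _.
have hcoer : forall p y, r <= vnorm p -> M <= Rabs (H p y w).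
  move=> p y hp; have h0 := hr0 p y; apply: h0; have := Rmax_l r0 1; rewrite -/r; lra.
set R2 := 2 * vnorm q + r + vnorm p0 + 2.
set R1 := R2 + vnorm p0 + 1.
have nq := vnorm_ge0 _ q; have np0 := vnorm_ge0 _ p0.
have [rho1 [hmod1 hrho1]] := hA3a w R1.
have [dr [hdr hdr']] := hmod1 (eps / 4) ltac:(lra).
have nb : forall z, vnorm z <= R2 -> vnorm (vadd p0 z) <= R1.
  by move=> z hz; have := vnorm_add_le _ p0 z; rewrite /R1; lra.
have cont_y : forall z y, vnorm z <= R2 -> vnorm (vsub y x) < dr ->
    Rabs (H (vadd p0 z) y w - H (vadd p0 z) x w) < eps / 4.
  move=> z y hz hy.
  apply: Rle_lt_trans (hrho1 _ _ y x (nb z hz) (nb z hz)) _.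
  rewrite vsub_same Rplus_0_l; apply: Rle_lt_trans (Rle_abs _) _.
  by apply: hdr' => //; exact: vnorm_ge0.
set r1 := Rmin (dr / 2) 1.
have hr1pos : 0 < r1 by rewrite /r1; apply: Rmin_glb_lt; lra.
have cont_q : forall z, vnorm (vsub z q) < r1 ->
    Rabs (H (vadd p0 z) x w - H (vadd p0 q) x w) < eps / 4.
  move=> z hz.
  have hz1 : vnorm (vsub z q) < 1 := Rlt_le_trans _ _ _ hz (Rmin_r _ _).
  have hz2 : vnorm (vsub z q) < dr by have := Rmin_l (dr / 2) 1; rewrite -/r1; lra.
  have nz : vnorm z <= R2 by have := vnorm_decomp _ z q; rewrite /R2; lra.
  have nqq : vnorm q <= R2 by rewrite /R2; lra.
  apply: Rle_lt_trans (hrho1 _ _ x x (nb z nz) (nb q nqq)) _.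
  rewrite vsub_same Rplus_0_r.
  rewrite (_ : vsub (vadd p0 z) (vadd p0 q) = vsub z q); last by apply: vext => i; rewrite /vsub /vadd; ring.
  apply: Rle_lt_trans (Rle_abs _) _.
  by apply: hdr' => //; exact: vnorm_ge0.
set C := fun z => vnorm z <= R2 /\ c - eps / 4 <= H (vadd p0 z) x w.
have Cmargin : forall z, C z -> r1 <= vnorm (vsub z q).
  move=> z [hz1 hz2]; apply: Rnot_lt_le => hlt.
  have := cont_q z hlt; split_Rabs; lra.
have Cbd : exists B, forall z, C z -> vnorm z <= B by exists R2 => z [].
have Ccl : closedS d C.
  move=> z hz.
  have nz : vnorm z <= R2.
    apply: (closed_ge _ (fun z => vnorm z) R2 z).
      by move=> z'; apply: vnorm_rev.
    by move=> eps' he'; have [z' [[? ?] ?]] := hz eps' he'; exists z'.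
  split => //; apply: Rnot_lt_le => hlt.
  set gap := c - eps / 4 - H (vadd p0 z) x w.
  have hgap : 0 < gap by rewrite /gap; lra.
  have [rho2 [hmod2 hrho2]] := pcw R1.
  have [d2 [hd2 hd2']] := hmod2 gap hgap.
  have [z' [[nz' hz'] hzz]] := hz d2 hd2.
  have := hrho2 _ _ x (nb z' nz') (nb z nz).
  rewrite (_ : vsub (vadd p0 z') (vadd p0 z) = vsub z' z); last by apply: vext => i; rewrite /vsub /vadd; ring.
  have := hd2' _ (vnorm_ge0 _ _) hzz.
  rewrite /gap in hgap *; split_Rabs; lra.
have Ccv : convexS d C.
  move=> z1 z2 t ht [n1 h1] [n2 h2]; split.
  - apply: Rle_trans (vnorm_triangle _ _ _) _; rewrite !vnorm_scale !Rabs_right; try lra.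
    nra.
  - rewrite (_ : vadd p0 (vadd (vscale t z1) (vscale (1 - t) z2)) =
      vadd (vscale t (vadd p0 z1)) (vscale (1 - t) (vadd p0 z2))); last first.
      by apply: vext => i; rewrite /vadd /vscale; ring.
    exact: qch.
set s := Rmin 1 dr.
have hs : 0 < s by rewrite /s; apply: Rmin_glb_lt; lra.
have hs1 : s <= 1 := Rmin_l _ _.
have hs2 : s <= dr := Rmin_r _ _.
have caseA : forall y z, vnorm (vsub y x) < s -> c <= H (vadd p0 z) y w -> vnorm (vadd p0 z) < r -> C z.
  move=> y z hy hc hz.
  have nz : vnorm z <= R2.
    have := vnorm_decomp _ z (vscale (-1) p0).
    rewrite (_ : vsub z (vscale (-1) p0) = vadd p0 z); last by apply: vext => i; rewrite /vsub /vadd /vscale; ring.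
    rewrite vnorm_scale Rabs_Ropp Rabs_R1 /R2; lra.
  split => //; have := cont_y z y nz ltac:(lra); split_Rabs; lra.
have highM : forall y z, c <= H (vadd p0 z) y w -> r <= vnorm (vadd p0 z) -> M <= H (vadd p0 z) y w.
  move=> y z hc hz; have := hcoer _ y hz; move: hMc; split_Rabs; lra.
have caseB2 : (1 < d)%nat -> forall y z, c <= H (vadd p0 z) y w -> r <= vnorm (vadd p0 z) -> False.
  move=> hd y z hc hz.
  have := no_pos_far_gen d hd (fun p => H p y w) M r C0 (pch y) hM0 hMC0
    (fun p hp => hcoer p y hp) (hC0' y) (qch y) _ hz.
  have := highM y z hc hz; lra.
have caseB1 : d = 1%nat -> forall y z, vnorm (vsub y x) < s -> c <= H (vadd p0 z) y w -> r <= vnorm (vadd p0 z) ->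
    exists z', C z' /\ vnorm z' <= r + vnorm p0 /\ c <= H (vadd p0 z') y w.
  move=> hd y z hy hc hz.
  set p' := vscale (r / vnorm (vadd p0 z)) (vadd p0 z).
  have hp' := radial d (fun p => H p y w) M r (vadd p0 z) (pch y) hM0 ltac:(lra)
    (fun p hp => hcoer p y hp) hz (highM y z hc hz).
  have np' : vnorm p' = r.
    rewrite /p' vnorm_scale Rabs_right.
      by field; lra.
    by apply: Rle_ge; apply: Rle_mult_inv_pos; lra.
  exists (vsub p' p0).
  have e' : vadd p0 (vsub p' p0) = p' by apply: vext => i; rewrite /vadd /vsub; ring.
  have nz' : vnorm (vsub p' p0) <= r + vnorm p0 by have := vnorm_sub_le _ p' p0; lra.
  have hc' : c <= H (vadd p0 (vsub p' p0)) y w by rewrite e'; rewrite /p'; move: hMc; split_Rabs; lra.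
  split; last by split.
  split; first by rewrite /R2; lra.
  have := cont_y (vsub p' p0) y ltac:(rewrite /R2; lra) ltac:(lra).
  split_Rabs; lra.
case: (classic (exists z, C z)) => hne.
-
  have [zs [e [Czs [he [heq [hal hmin]]]]]] := proj d C q r1 hne Cbd Ccl Ccv hr1pos Cmargin.
  apply: (DET d u x q e (dot e zs) s hbuc hsup he ltac:(lra) hs).
  move=> y z hy hz.
  have hc := key y z ltac:(lra) hz.
  case: (Rlt_le_dec (vnorm (vadd p0 z)) r) => hzr.
    by apply: hal; apply: (caseA y z hy hc hzr).
  case: (ltngtP d 1) => hd.
  + by exfalso; move: hd hdpos; rewrite ltnS leqn0 => /eqP ->.
  + by exfalso; apply: (caseB2 hd y z hc hzr).
  + have hd' : d = 1%nat by [].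
    have [z' [Cz' [nz' hcz']]] := caseB1 hd' y z hy hc hzr.
    have hal' := hal z' Cz'.
    apply: Rnot_lt_le => hlt.
    set al := dot e zs in hal hal' hlt.
    set th := Rmin 1 ((al - dot e z) / 2).
    have hth : 0 < th by rewrite /th; apply: Rmin_glb_lt; lra.
    have hth1 : th <= 1 := Rmin_l _ _.
    have hth2 : th <= (al - dot e z) / 2 := Rmin_r _ _.
    set ta := al - th.
    set den := dot e z' - dot e z.
    have hden : 0 < den by rewrite /den; lra.
    set s0 := (dot e z' - ta) / den.
    have hs0a : 0 <= s0 by rewrite /s0; apply: Rle_mult_inv_pos; rewrite /ta; lra.
    have hs0b : s0 <= 1.
      rewrite /s0; apply: (Rmult_le_reg_r den) => //.
      rewrite (_ : (dot e z' - ta) / den * den = dot e z' - ta); last by field; lra.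
      rewrite /den /ta; lra.
    set m := vadd (vscale (1 - s0) z') (vscale (1 - (1 - s0)) z).
    have hm : c <= H (vadd p0 m) y w.
      rewrite (_ : vadd p0 m = vadd (vscale (1 - s0) (vadd p0 z')) (vscale (1 - (1 - s0)) (vadd p0 z))); last first.
        by apply: vext => i; rewrite /m /vadd /vscale; ring.
      apply: qch => //; lra.
    have dm : dot e m = ta.
      rewrite /m dot_addr !dot_scaler /s0.
      rewrite /den; field; rewrite /den in hden; lra.
    have nm : vnorm m <= R2.
      rewrite (vnorm_1 _ e m hd' he) dm.
      have h1 : Rabs al <= vnorm zs by apply: dot_e_le.
      have h2 : vnorm zs <= vnorm (vsub zs q) + vnorm q := vnorm_decomp _ _ _.
      have h3 := hmin z' Cz'.
      have h4 := vnorm_sub_le _ z' q.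
      rewrite /ta /R2; move: h1; split_Rabs; lra.
    have Cm : C m by split => //; have := cont_y m y nm ltac:(lra); split_Rabs; lra.
    have := hal m Cm; rewrite dm /ta; lra.
-
  pose i0 : 'I_d := Ordinal hdpos.
  pose e := bas d i0.
  have he : dot e e = 1 by rewrite /e dot_bas /bas eqxx.
  apply: (DET d u x q e (dot e q + 1) s hbuc hsup he ltac:(lra) hs).
  move=> y z hy hz; exfalso.
  have hc := key y z ltac:(lra) hz.
  case: (Rlt_le_dec (vnorm (vadd p0 z)) r) => hzr.
    by apply: hne; exists z; apply: (caseA y z hy hc hzr).
  case: (ltngtP d 1) => hd.
  + by move: hd; rewrite ltnS leqn0 => /eqP hd00; move: hd0; rewrite hd00.
  + exact: (caseB2 hd y z hc hzr).
  + have [z' [Cz' _]] := caseB1 hd y z hy hc hzr.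
    by apply: hne; exists z'.
Qed.
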